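(* Fix $s\in(0,1)$ and let $F,V_s,\psi_1,\psi_3,p_{+,s},q_{-,s},q_+$ and $\overline H_s$ be as in the context. Then $0<p_{+,s}<q_{-,s}<q_+$ and: (a) if $0\le p\le p_{+,s}$, then $\overline H_s(p)=0$; (b) if $p_{+,s}\le p\le q_{-,s}$, then $\overline H_s(p)$ is the unique $\lambda\in[0,1/3]$ with $p=\int_\lambda^{1/3}\psi_3(y)dy+\int_{1/2}^{1+\lambda}\psi_1(y)dy+\int_{1/3}^{1/2}[s\psi_1(y)+(1-s)\psi_3(y)]dy$; (c) if $q_{-,s}\le p\le q_+$, then $\overline H_s(p)=1/3$; (d) if $p\ge q_+$, then $\overline H_s(p)$ is the unique $\lambda\ge1/3$ with $p=\int_\lambda^{1+\lambda}\psi_1(y)dy$; (e) if $p<0$, then $\overline H_s(p)=\overline H_{1-s}(-p)$.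
   Context: $F:\mathbb R\to\mathbb R$ is smooth and even, and for some $0<\theta_3<\theta_2<\theta_1$: $F(0)=0$, $F(\theta_2)=1/2$, $F(\theta_1)=F(\theta_3)=1/3$, $F(r)\to+\infty$ as $r\to\infty$, $F$ strictly increasing on $[0,\theta_2]\cup[\theta_1,\infty)$ and strictly decreasing on $[\theta_2,\theta_1]$. For $r\in(0,1)$, $V_r$ is the $1$-periodic function with $V_r(x)=x/r$ for $0\le x\le r$ and $V_r(x)=(1-x)/(1-r)$ for $r<x\le1$, and $\overline H_r(p)$ is the unique constant $\lambda$ for which $F(w'(y))-V_r(y)=\lambda$ in $\mathbb R$ has a viscosity solution $w$ with $w(x)-px$ periodic. $\psi_1:=(F|_{[\theta_1,\infty)})^{-1}:[1/3,\infty)\to[\theta_1,\infty)$ and $\psi_3:=(F|_{[0,\theta_2]})^{-1}:[0,1/2]\to[0,\theta_2]$. Further, $p_{+,s}:=\int_0^{1/3}\psi_3+\int_{1/2}^1\psi_1+\int_{1/3}^{1/2}[s\psi_1+(1-s)\psi_3]$, $q_{-,s}:=\int_{1/2}^{4/3}\psi_1+\int_{1/3}^{1/2}[s\psi_1+(1-s)\psi_3]$, $q_+:=\int_{1/3}^{4/3}\psi_1$ (integrals in $dy$). *)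

(* Defs.v *)
From Stdlib Require Import Reals Lra ClassicalEpsilon.
From Coquelicot Require Import Coquelicot.
Open Scope R_scope.

Definition Vr (r x : R) : R :=
  let t := frac_part x in
  if Rle_dec t r then t / r else (1 - t) / (1 - r).

Definition C1 (phi : R -> R) : Prop :=
  (forall x, ex_derive phi x) /\ (forall x, continuous (Derive phi) x).

Definition local_max (f : R -> R) (x0 : R) : Prop :=
  exists d : R, 0 < d /\ forall x, Rabs (x - x0) < d -> f x <= f x0.

Definition local_min (f : R -> R) (x0 : R) : Prop :=
  exists d : R, 0 < d /\ forall x, Rabs (x - x0) < d -> f x0 <= f x.

Definition visc_subsol (F V : R -> R) (lam : R) (w : R -> R) : Prop :=
  forall phi x0, C1 phi -> local_max (fun x => w x - phi x) x0 ->
    F (Derive phi x0) - V x0 <= lam.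

Definition visc_supersol (F V : R -> R) (lam : R) (w : R -> R) : Prop :=
  forall phi x0, C1 phi -> local_min (fun x => w x - phi x) x0 ->
    F (Derive phi x0) - V x0 >= lam.

Definition visc_sol (F V : R -> R) (lam : R) (w : R -> R) : Prop :=
  (forall x, continuous w x) /\ visc_subsol F V lam w /\ visc_supersol F V lam w.

Definition cell_solvable (F : R -> R) (r p lam : R) : Prop :=
  exists w : R -> R, visc_sol F (Vr r) lam w /\
    forall x, w (x + 1) - p * (x + 1) = w x - p * x.

(* Effective Hamiltonian: the (unique) constant lam for which the cell
   problem is solvable. *)
Definition Hbar (F : R -> R) (r p : R) : R :=
  epsilon (inhabits 0) (fun lam => cell_solvable F r p lam).

Definition F_hyp (F : R -> R) (th1 th2 th3 : R) : Prop :=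
  (forall n x, ex_derive_n F n x) /\
  (forall x, F (- x) = F x) /\
  0 < th3 < th2 /\ th2 < th1 /\
  F 0 = 0 /\ F th2 = 1/2 /\ F th1 = 1/3 /\ F th3 = 1/3 /\
  (forall M, exists N, forall x, N <= x -> M <= F x) /\
  (forall x y, 0 <= x -> x < y -> y <= th2 -> F x < F y) /\
  (forall x y, th1 <= x -> x < y -> F x < F y) /\
  (forall x y, th2 <= x -> x < y -> y <= th1 -> F y < F x).

Definition psi1_spec (F psi1 : R -> R) (th1 : R) : Prop :=
  forall y, 1/3 <= y -> th1 <= psi1 y /\ F (psi1 y) = y.

Definition psi3_spec (F psi3 : R -> R) (th2 : R) : Prop :=
  forall y, 0 <= y <= 1/2 -> 0 <= psi3 y <= th2 /\ F (psi3 y) = y.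

Definition mix (s : R) (psi1 psi3 : R -> R) : R -> R :=
  fun y => s * psi1 y + (1 - s) * psi3 y.

Definition p_plus (s : R) (psi1 psi3 : R -> R) : R :=
  RInt psi3 0 (1/3) + RInt psi1 (1/2) 1 + RInt (mix s psi1 psi3) (1/3) (1/2).

Definition q_minus (s : R) (psi1 psi3 : R -> R) : R :=
  RInt psi1 (1/2) (4/3) + RInt (mix s psi1 psi3) (1/3) (1/2).

Definition q_plus (psi1 : R -> R) : R := RInt psi1 (1/3) (4/3).

Definition Gb (s : R) (psi1 psi3 : R -> R) (lam : R) : R :=
  RInt psi3 lam (1/3) + RInt psi1 (1/2) (1 + lam) + RInt (mix s psi1 psi3) (1/3) (1/2).

Definition Gd (psi1 : R -> R) (lam : R) : R := RInt psi1 lam (1 + lam).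

(* Main.v *)
From Stdlib Require Import Reals Lra Lia ZArith ClassicalEpsilon FunctionalExtensionality PropExtensionality List.
From Coquelicot Require Import Coquelicot.
Require Import Defs.
Open Scope R_scope.
Import ListNotations.

Module P1.

Lemma ip_spec (x : R) (z : Z) : IZR z <= x < IZR z + 1 ->
  Int_part x = z /\ frac_part x = x - IZR z.
Proof.
  intros H. destruct (Int_part_frac_part_spec x z (x - IZR z)) as [H1 H2]; [lra|lra|].
  split; auto.
Qed.

Definition V0 (s t : R) := Rmin (t / s) ((1 - t) / (1 - s)).

Lemma Vr_V0 (s x : R) : 0 < s < 1 -> Vr s x = V0 s (frac_part x).
Proof.
  intros Hs. unfold Vr, V0. destruct (base_fp x) as [H0 H1].
  set (t := frac_part x) in *.
  destruct (Rle_dec t s) as [h|h].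
  - rewrite Rmin_left; auto.
    apply Rle_trans with 1.
    + apply (Rmult_le_reg_r s); [lra|]. unfold Rdiv; rewrite Rmult_assoc, Rinv_l; lra.
    + apply (Rmult_le_reg_r (1-s)); [lra|]. unfold Rdiv; rewrite Rmult_assoc, Rinv_l; lra.
  - rewrite Rmin_right; auto.
    apply Rle_trans with 1.
    + apply (Rmult_le_reg_r (1-s)); [lra|]. unfold Rdiv; rewrite Rmult_assoc, Rinv_l; lra.
    + apply (Rmult_le_reg_r s); [lra|]. unfold Rdiv; rewrite Rmult_assoc, Rinv_l; lra.
Qed.

Lemma V0_bounds (s t : R) : 0 < s < 1 -> 0 <= t <= 1 -> 0 <= V0 s t <= 1.
Proof.
  intros Hs Ht. unfold V0. split.
  - apply Rmin_glb; apply Rmult_le_pos; try lra; left; apply Rinv_0_lt_compat; lra.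
  - destruct (Rle_dec t s).
    + apply Rle_trans with (t/s); [apply Rmin_l|].
      apply (Rmult_le_reg_r s); [lra|]. unfold Rdiv; rewrite Rmult_assoc, Rinv_l; lra.
    + apply Rle_trans with ((1-t)/(1-s)); [apply Rmin_r|].
      apply (Rmult_le_reg_r (1-s)); [lra|]. unfold Rdiv; rewrite Rmult_assoc, Rinv_l; lra.
Qed.

Lemma Vr_bounds (s x : R) : 0 < s < 1 -> 0 <= Vr s x <= 1.
Proof.
  intros Hs. rewrite Vr_V0 by auto. apply V0_bounds; auto.
  destruct (base_fp x); lra.
Qed.

Lemma Vr_shift (s x : R) (k : Z) (t : R) : 0 < s < 1 -> 0 <= t < 1 -> x = IZR k + t ->
  Vr s x = V0 s t.
Proof.
  intros Hs Ht ->. rewrite Vr_V0 by auto.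
  destruct (ip_spec (IZR k + t) k) as [_ H]; [lra|]. rewrite H. f_equal; ring.
Qed.

Lemma Rmin_lip (u1 v1 u2 v2 M : R) : Rabs (u1 - u2) <= M -> Rabs (v1 - v2) <= M ->
  Rabs (Rmin u1 v1 - Rmin u2 v2) <= M.
Proof.
  intros H1 H2. unfold Rmin.
  destruct (Rle_dec u1 v1), (Rle_dec u2 v2); apply Rabs_le;
  apply Rabs_le_between in H1; apply Rabs_le_between in H2; lra.
Qed.

Definition Lip (s : R) := / s + / (1 - s).

Lemma Lip_ge1 (s : R) : 0 < s < 1 -> 1 <= Lip s.
Proof.
  intros Hs. unfold Lip. assert (1 < / s).
  { rewrite <- Rinv_1. apply Rinv_lt_contravar; lra. }
  assert (0 < / (1 - s)) by (apply Rinv_0_lt_compat; lra). lra.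
Qed.

Lemma Vr_lip_le (s a b : R) : 0 < s < 1 -> a <= b -> Rabs (Vr s a - Vr s b) <= Lip s * (b - a).
Proof.
  intros Hs Hab.
  assert (is : 0 < / s) by (apply Rinv_0_lt_compat; lra).
  assert (is' : 0 < / (1-s)) by (apply Rinv_0_lt_compat; lra).
  destruct (base_Int_part a) as [Ha1 Ha2]. destruct (base_Int_part b) as [Hb1 Hb2].
  set (ka := Int_part a) in *. set (kb := Int_part b) in *.
  assert (Hd : (0 <= kb - ka)%Z).
  { assert (-1 < kb - ka)%Z. { apply lt_IZR. rewrite minus_IZR. simpl. lra. } lia. }
  rewrite !Vr_V0 by auto.
  assert (Hfa : frac_part a = a - IZR ka) by reflexivity.
  assert (Hfb : frac_part b = b - IZR kb) by reflexivity.
  destruct (Z.eq_dec (kb - ka) 0) as [E|E].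
  - assert (IZR kb = IZR ka) by (f_equal; lia).
    unfold V0. apply Rmin_lip.
    + rewrite Hfa, Hfb. apply Rabs_le. unfold Lip, Rdiv. rewrite H. split; nra.
    + rewrite Hfa, Hfb. apply Rabs_le. unfold Lip, Rdiv. rewrite H. split; nra.
  - destruct (Z.eq_dec (kb - ka) 1) as [E1|E1].
    + assert (IZR kb = IZR ka + 1) by (rewrite <- plus_IZR; f_equal; lia).
      destruct (V0_bounds s (frac_part a)) as [A1 A2]; auto. { destruct (base_fp a); lra. }
      destruct (V0_bounds s (frac_part b)) as [B1 B2]; auto. { destruct (base_fp b); lra. }
      assert (Va : V0 s (frac_part a) <= Lip s * (1 - frac_part a)).
      { unfold V0. apply Rle_trans with ((1 - frac_part a) / (1-s)); [apply Rmin_r|].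
        unfold Lip, Rdiv. destruct (base_fp a). assert (0 <= /s * (1 - frac_part a)) by (apply Rmult_le_pos; lra). nra. }
      assert (Vb : V0 s (frac_part b) <= Lip s * frac_part b).
      { unfold V0. apply Rle_trans with (frac_part b / s); [apply Rmin_l|].
        unfold Lip, Rdiv. destruct (base_fp b). assert (0 <= /(1-s) * frac_part b) by (apply Rmult_le_pos; lra). nra. }
      assert (Lip s * (1 - frac_part a) <= Lip s * (b - a)).
      { apply Rmult_le_compat_l. unfold Lip; lra. destruct (base_fp b). rewrite Hfa, Hfb in *. lra. }
      assert (Lip s * frac_part b <= Lip s * (b - a)).
      { apply Rmult_le_compat_l. unfold Lip; lra. destruct (base_fp a). rewrite Hfa, Hfb in *. lra. }
      apply Rabs_le. lra.
    + assert (2 <= IZR (kb - ka)) by (apply IZR_le; lia). rewrite minus_IZR in H.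
      destruct (V0_bounds s (frac_part a)) as [A1 A2]; auto. { destruct (base_fp a); lra. }
      destruct (V0_bounds s (frac_part b)) as [B1 B2]; auto. { destruct (base_fp b); lra. }
      pose proof (Lip_ge1 s Hs). apply Rabs_le. nra.
Qed.

Lemma Vr_lip (s a b : R) : 0 < s < 1 -> Rabs (Vr s a - Vr s b) <= Lip s * Rabs (a - b).
Proof.
  intros Hs. destruct (Rle_dec a b).
  - rewrite (Rabs_left1 (a - b)) by lra. replace (- (a - b)) with (b - a) by ring. apply Vr_lip_le; auto.
  - rewrite Rabs_minus_sym. rewrite (Rabs_right (a - b)) by lra. apply Vr_lip_le; lra.
Qed.

Lemma Vr_sym (s x : R) : 0 < s < 1 -> Vr s (- x) = Vr (1 - s) x.
Proof.
  intros Hs. assert (Hs' : 0 < 1 - s < 1) by lra.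
  destruct (base_Int_part x) as [H1 H2]. set (k := Int_part x) in *.
  destruct (Req_dec x (IZR k)) as [E|E].
  - rewrite (Vr_shift s (-x) (-k) 0), (Vr_shift (1-s) x k 0); auto; try lra.
    + unfold V0. unfold Rdiv. rewrite !Rmult_0_l. rewrite !Rmin_left; auto;
      apply Rmult_le_pos; try lra; left; apply Rinv_0_lt_compat; lra.
    + rewrite opp_IZR. lra.
  - rewrite (Vr_shift s (-x) (-k - 1) (IZR k + 1 - x)), (Vr_shift (1-s) x k (x - IZR k)); auto; try lra.
    + unfold V0. rewrite Rmin_comm. f_equal; f_equal; ring.
    + rewrite minus_IZR, opp_IZR. simpl. ring.
Qed.

Lemma Vr_period (s x : R) : 0 < s < 1 -> Vr s (x + 1) = Vr s x.
Proof.
  intros Hs. destruct (base_Int_part x) as [H1 H2]. set (k := Int_part x) in *.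
  rewrite (Vr_shift s x k (x - IZR k)), (Vr_shift s (x+1) (k+1) (x - IZR k)); auto; try lra.
  rewrite plus_IZR; simpl; ring.
Qed.

End P1.
Import P1.

Module P2.

Definition RD (f : R -> R) (x d : R) : Prop :=
  forall eps, 0 < eps -> exists del, 0 < del /\
    forall h, 0 < h < del -> Rabs ((f (x + h) - f x) / h - d) < eps.
Definition LD (f : R -> R) (x d : R) : Prop :=
  forall eps, 0 < eps -> exists del, 0 < del /\
    forall h, - del < h < 0 -> Rabs ((f (x + h) - f x) / h - d) < eps.

Lemma derive_RLD (f : R -> R) x d : is_derive f x d -> RD f x d /\ LD f x d.
Proof.
  intros H. apply is_derive_Reals in H.
  split; intros eps He; destruct (H eps He) as [del Hd]; exists del; split;
  try apply cond_pos; intros h Hh; apply Hd; try lra; apply Rabs_lt_between; lra.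
Qed.

Lemma RD_ext (f g : R -> R) x d : (exists del, 0 < del /\ forall y, x <= y < x + del -> f y = g y) ->
  RD g x d -> RD f x d.
Proof.
  intros [del0 [H0 H1]] H eps He. destruct (H eps He) as [del [Hd Hh]].
  exists (Rmin del del0). split. apply Rmin_glb_lt; auto.
  intros h Hh'. assert (h < del) by (apply Rlt_le_trans with (1:=proj2 Hh'); apply Rmin_l).
  assert (h < del0) by (apply Rlt_le_trans with (1:=proj2 Hh'); apply Rmin_r).
  rewrite (H1 (x+h)), (H1 x) by lra. apply Hh; lra.
Qed.

Lemma LD_ext (f g : R -> R) x d : (exists del, 0 < del /\ forall y, x - del < y <= x -> f y = g y) ->
  LD g x d -> LD f x d.
Proof.
  intros [del0 [H0 H1]] H eps He. destruct (H eps He) as [del [Hd Hh]].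
  exists (Rmin del del0). split. apply Rmin_glb_lt; auto.
  intros h Hh'. assert (- del < h). { assert (Rmin del del0 <= del) by apply Rmin_l. lra. }
  assert (-del0 < h). { assert (Rmin del del0 <= del0) by apply Rmin_r. lra. }
  rewrite (H1 (x+h)), (H1 x) by lra. apply Hh; lra.
Qed.

Lemma RD_plus f g x a b : RD f x a -> RD g x b -> RD (fun y => f y + g y) x (a + b).
Proof.
  intros H1 H2 eps He. destruct (H1 (eps/2)) as [d1 [Hd1 K1]]; [lra|].
  destruct (H2 (eps/2)) as [d2 [Hd2 K2]]; [lra|].
  exists (Rmin d1 d2). split. apply Rmin_glb_lt; auto. intros h Hh.
  assert (h < d1) by (apply Rlt_le_trans with (1:=proj2 Hh); apply Rmin_l).
  assert (h < d2) by (apply Rlt_le_trans with (1:=proj2 Hh); apply Rmin_r).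
  specialize (K1 h ltac:(lra)). specialize (K2 h ltac:(lra)).
  replace ((f (x + h) + g (x + h) - (f x + g x)) / h - (a + b)) with
    (((f (x + h) - f x) / h - a) + ((g (x + h) - g x) / h - b)) by (field; lra).
  eapply Rle_lt_trans. apply Rabs_triang. lra.
Qed.

Lemma LD_plus f g x a b : LD f x a -> LD g x b -> LD (fun y => f y + g y) x (a + b).
Proof.
  intros H1 H2 eps He. destruct (H1 (eps/2)) as [d1 [Hd1 K1]]; [lra|].
  destruct (H2 (eps/2)) as [d2 [Hd2 K2]]; [lra|].
  exists (Rmin d1 d2). split. apply Rmin_glb_lt; auto. intros h Hh.
  assert (-d1 < h). { assert (Rmin d1 d2 <= d1) by apply Rmin_l. lra. }
  assert (-d2 < h). { assert (Rmin d1 d2 <= d2) by apply Rmin_r. lra. }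
  specialize (K1 h ltac:(lra)). specialize (K2 h ltac:(lra)).
  replace ((f (x + h) + g (x + h) - (f x + g x)) / h - (a + b)) with
    (((f (x + h) - f x) / h - a) + ((g (x + h) - g x) / h - b)) by (field; lra).
  eapply Rle_lt_trans. apply Rabs_triang. lra.
Qed.

Lemma RD_const c x : RD (fun _ => c) x 0.
Proof.
  intros eps He. exists 1. split; [lra|]. intros h Hh.
  replace ((c - c) / h - 0) with 0 by (field; lra). rewrite Rabs_R0; lra.
Qed.

Lemma LD_const c x : LD (fun _ => c) x 0.
Proof.
  intros eps He. exists 1. split; [lra|]. intros h Hh.
  replace ((c - c) / h - 0) with 0 by (field; lra). rewrite Rabs_R0; lra.
Qed.

Lemma aff_quot (f : R -> R) a k x h : k <> 0 -> h <> 0 ->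
  (f (a + k * (x + h)) - f (a + k * x)) / h - k * (let d := 0 in d) =
  k * ((f ((a + k * x) + k * h) - f (a + k * x)) / (k * h)).
Proof. intros. simpl. replace (a + k * (x + h)) with ((a + k*x) + k*h) by ring. field; auto. Qed.

Lemma RD_aff_pos f a k x d : 0 < k -> RD f (a + k * x) d -> RD (fun y => f (a + k * y)) x (k * d).
Proof.
  intros Hk H eps He. destruct (H (eps / k)) as [del [Hd K]].
  { apply Rdiv_lt_0_compat; auto. }
  exists (del / k). split. apply Rdiv_lt_0_compat; auto. intros h Hh.
  assert (0 < k * h < del).
  { split. nra. apply (Rmult_lt_reg_r (/k)). apply Rinv_0_lt_compat; auto.
    replace (k * h * / k) with h by (field; lra). apply Hh. }
  specialize (K (k*h) H0).
  replace ((f (a + k * (x + h)) - f (a + k * x)) / h - k * d) with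
    (k * ((f (a + k * x + k * h) - f (a + k * x)) / (k * h) - d)).
  2:{ replace (a + k * (x + h)) with (a + k * x + k * h) by ring. field; lra. }
  rewrite Rabs_mult, Rabs_right by lra.
  apply (Rmult_lt_reg_r (/k)). apply Rinv_0_lt_compat; auto.
  replace (k * Rabs ((f (a + k * x + k * h) - f (a + k * x)) / (k * h) - d) * / k) with
    (Rabs ((f (a + k * x + k * h) - f (a + k * x)) / (k * h) - d)) by (field; lra).
  apply K.
Qed.

Lemma LD_aff_pos f a k x d : 0 < k -> LD f (a + k * x) d -> LD (fun y => f (a + k * y)) x (k * d).
Proof.
  intros Hk H eps He. destruct (H (eps / k)) as [del [Hd K]].
  { apply Rdiv_lt_0_compat; auto. }
  exists (del / k). split. apply Rdiv_lt_0_compat; auto. intros h Hh.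
  assert (- del < k * h < 0).
  { split. 2: nra. assert (h * k > - del / k * k) by (apply Rmult_gt_compat_r; lra).
    replace (- del / k * k) with (-del) in H0 by (field; lra). lra. }
  specialize (K (k*h) H0).
  replace ((f (a + k * (x + h)) - f (a + k * x)) / h - k * d) with
    (k * ((f (a + k * x + k * h) - f (a + k * x)) / (k * h) - d)).
  2:{ replace (a + k * (x + h)) with (a + k * x + k * h) by ring. field; lra. }
  rewrite Rabs_mult, Rabs_right by lra.
  apply (Rmult_lt_reg_r (/k)). apply Rinv_0_lt_compat; auto.
  replace (k * Rabs ((f (a + k * x + k * h) - f (a + k * x)) / (k * h) - d) * / k) with
    (Rabs ((f (a + k * x + k * h) - f (a + k * x)) / (k * h) - d)) by (field; lra).
  apply K.
Qed.

Lemma RD_aff_neg f a k x d : k < 0 -> LD f (a + k * x) d -> RD (fun y => f (a + k * y)) x (k * d).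
Proof.
  intros Hk H eps He. destruct (H (eps / (-k))) as [del [Hd K]].
  { apply Rdiv_lt_0_compat; lra. }
  exists (del / (-k)). split. apply Rdiv_lt_0_compat; lra. intros h Hh.
  assert (- del < k * h < 0).
  { split. 2: nra. assert (h * (-k) < del / (-k) * (-k)) by (apply Rmult_lt_compat_r; lra).
    replace (del / (-k) * (-k)) with del in H0 by (field; lra). lra. }
  specialize (K (k*h) H0).
  replace ((f (a + k * (x + h)) - f (a + k * x)) / h - k * d) with
    (k * ((f (a + k * x + k * h) - f (a + k * x)) / (k * h) - d)).
  2:{ replace (a + k * (x + h)) with (a + k * x + k * h) by ring. field; lra. }
  rewrite Rabs_mult, (Rabs_left k) by lra.
  apply (Rmult_lt_reg_r (/(-k))). apply Rinv_0_lt_compat; lra.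
  replace (- k * Rabs ((f (a + k * x + k * h) - f (a + k * x)) / (k * h) - d) * / -k) with
    (Rabs ((f (a + k * x + k * h) - f (a + k * x)) / (k * h) - d)) by (field; lra).
  apply K.
Qed.

Lemma LD_aff_neg f a k x d : k < 0 -> RD f (a + k * x) d -> LD (fun y => f (a + k * y)) x (k * d).
Proof.
  intros Hk H eps He. destruct (H (eps / (-k))) as [del [Hd K]].
  { apply Rdiv_lt_0_compat; lra. }
  exists (del / (-k)). split. apply Rdiv_lt_0_compat; lra. intros h Hh.
  assert (0 < k * h < del).
  { split. nra. assert ((-h) * (-k) < del / (-k) * (-k)) by (apply Rmult_lt_compat_r; lra).
    replace (del / (-k) * (-k)) with del in H0 by (field; lra). lra. }
  specialize (K (k*h) H0).
  replace ((f (a + k * (x + h)) - f (a + k * x)) / h - k * d) with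
    (k * ((f (a + k * x + k * h) - f (a + k * x)) / (k * h) - d)).
  2:{ replace (a + k * (x + h)) with (a + k * x + k * h) by ring. field; lra. }
  rewrite Rabs_mult, (Rabs_left k) by lra.
  apply (Rmult_lt_reg_r (/(-k))). apply Rinv_0_lt_compat; lra.
  replace (- k * Rabs ((f (a + k * x + k * h) - f (a + k * x)) / (k * h) - d) * / -k) with
    (Rabs ((f (a + k * x + k * h) - f (a + k * x)) / (k * h) - d)) by (field; lra).
  apply K.
Qed.

Lemma RD_scal f c x d : RD f x d -> RD (fun y => c * f y) x (c * d).
Proof.
  intros H eps He. destruct (H (eps / (Rabs c + 1))) as [del [Hd K]].
  { apply Rdiv_lt_0_compat; auto. pose proof (Rabs_pos c); lra. }
  exists del. split; auto. intros h Hh. specialize (K h Hh).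
  replace ((c * f (x + h) - c * f x) / h - c * d) with (c * ((f (x + h) - f x) / h - d)) by (field; lra).
  rewrite Rabs_mult. pose proof (Rabs_pos c).
  pose proof (Rabs_pos ((f (x + h) - f x) / h - d)).
  apply Rle_lt_trans with ((Rabs c + 1) * Rabs ((f (x + h) - f x) / h - d)). nra.
  apply (Rmult_lt_reg_r (/ (Rabs c + 1))). apply Rinv_0_lt_compat; lra.
  replace ((Rabs c + 1) * Rabs ((f (x + h) - f x) / h - d) * / (Rabs c + 1)) with
    (Rabs ((f (x + h) - f x) / h - d)) by (field; lra). apply K.
Qed.

Lemma LD_scal f c x d : LD f x d -> LD (fun y => c * f y) x (c * d).
Proof.
  intros H eps He. destruct (H (eps / (Rabs c + 1))) as [del [Hd K]].
  { apply Rdiv_lt_0_compat; auto. pose proof (Rabs_pos c); lra. }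
  exists del. split; auto. intros h Hh. specialize (K h Hh).
  replace ((c * f (x + h) - c * f x) / h - c * d) with (c * ((f (x + h) - f x) / h - d)) by (field; lra).
  rewrite Rabs_mult. pose proof (Rabs_pos c).
  pose proof (Rabs_pos ((f (x + h) - f x) / h - d)).
  apply Rle_lt_trans with ((Rabs c + 1) * Rabs ((f (x + h) - f x) / h - d)). nra.
  apply (Rmult_lt_reg_r (/ (Rabs c + 1))). apply Rinv_0_lt_compat; lra.
  replace ((Rabs c + 1) * Rabs ((f (x + h) - f x) / h - d) * / (Rabs c + 1)) with
    (Rabs ((f (x + h) - f x) / h - d)) by (field; lra). apply K.
Qed.

Lemma RD_eq f x d d' : d = d' -> RD f x d -> RD f x d'.
Proof. intros ->; auto. Qed.
Lemma LD_eq f x d d' : d = d' -> LD f x d -> LD f x d'.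
Proof. intros ->; auto. Qed.

Lemma RD_max f x d : RD f x d -> (exists del, 0 < del /\ forall h, 0 < h < del -> f (x + h) <= f x) -> d <= 0.
Proof.
  intros H [del0 [H0 H1]]. destruct (Rle_dec d 0) as [|Hn]; auto. exfalso.
  destruct (H (d/2)) as [del [Hd K]]; [lra|].
  set (h := Rmin del del0 / 2).
  assert (0 < h < del /\ h < del0) as [Hh1 Hh2].
  { unfold h. pose proof (Rmin_l del del0). pose proof (Rmin_r del del0).
    assert (0 < Rmin del del0) by (apply Rmin_glb_lt; auto). lra. }
  specialize (K h Hh1). specialize (H1 h ltac:(lra)).
  apply Rabs_lt_between in K. destruct K as [K _].
  assert ((f (x + h) - f x) / h <= 0).
  { unfold Rdiv. apply Rmult_le_0_r. lra. left; apply Rinv_0_lt_compat; lra. }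
  lra.
Qed.

Lemma LD_max f x d : LD f x d -> (exists del, 0 < del /\ forall h, - del < h < 0 -> f (x + h) <= f x) -> 0 <= d.
Proof.
  intros H [del0 [H0 H1]]. destruct (Rle_dec 0 d) as [|Hn]; auto. exfalso.
  destruct (H (-d/2)) as [del [Hd K]]; [lra|].
  set (h := - (Rmin del del0 / 2)).
  assert (- del < h < 0 /\ -del0 < h) as [Hh1 Hh2].
  { unfold h. pose proof (Rmin_l del del0). pose proof (Rmin_r del del0).
    assert (0 < Rmin del del0) by (apply Rmin_glb_lt; auto). lra. }
  specialize (K h Hh1). specialize (H1 h ltac:(lra)).
  apply Rabs_lt_between in K. destruct K as [_ K].
  assert (0 <= (f (x + h) - f x) / h).
  { unfold Rdiv. replace ((f (x + h) - f x) * / h) with ((f x - f (x+h)) * / (-h)) by (field; lra).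
    apply Rmult_le_pos. lra. left; apply Rinv_0_lt_compat; lra. }
  lra.
Qed.

Lemma neg_RD f x d : RD f x d -> RD (fun y => - f y) x (- d).
Proof. intros H. apply (RD_eq _ _ ((-1) * d)); [ring|]. apply (RD_ext _ (fun y => (-1) * f y)).
  exists 1; split; [lra|]; intros; ring. apply RD_scal; auto. Qed.
Lemma neg_LD f x d : LD f x d -> LD (fun y => - f y) x (- d).
Proof. intros H. apply (LD_eq _ _ ((-1) * d)); [ring|]. apply (LD_ext _ (fun y => (-1) * f y)).
  exists 1; split; [lra|]; intros; ring. apply LD_scal; auto. Qed.

Lemma RLD_cont f x a b : RD f x b -> LD f x a -> continuous f x.
Proof.
  intros Hr Hl. apply (proj1 (continuity_pt_filterlim f x)).
  unfold continuity_pt, continue_in, limit1_in, limit_in. simpl. intros eps He.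
  destruct (Hr 1) as [d1 [Hd1 K1]]; [lra|]. destruct (Hl 1) as [d2 [Hd2 K2]]; [lra|].
  set (M := Rabs a + Rabs b + 2).
  assert (HM : 0 < M) by (unfold M; pose proof (Rabs_pos a); pose proof (Rabs_pos b); lra).
  exists (Rmin (Rmin d1 d2) (eps / M)). split.
  { apply Rmin_glb_lt. apply Rmin_glb_lt; auto. apply Rdiv_lt_0_compat; auto. }
  intros y [_ Hy]. unfold R_dist in *. unfold dist in *. simpl in *. unfold R_dist in *.
  pose proof (Rmin_l (Rmin d1 d2) (eps/M)). pose proof (Rmin_r (Rmin d1 d2) (eps/M)).
  pose proof (Rmin_l d1 d2). pose proof (Rmin_r d1 d2).
  destruct (Rtotal_order y x) as [Hlt|[Heq|Hgt]].
  - set (h := y - x). replace y with (x + h) by (unfold h; ring).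
    rewrite Rabs_left in Hy by lra.
    specialize (K2 h ltac:(unfold h in *; lra)).
    apply Rabs_lt_between in K2.
    assert (Rabs ((f (x + h) - f x) / h) <= M).
    { apply Rabs_le. unfold M. pose proof (Rabs_pos b). split.
      pose proof (Rle_abs (-a)); rewrite Rabs_Ropp in *; lra. pose proof (Rle_abs a); lra. }
    replace (f (x + h) - f x) with (((f (x + h) - f x) / h) * h) by (field; unfold h in *; lra).
    rewrite Rabs_mult. rewrite (Rabs_left h) by (unfold h in *; lra).
    apply Rle_lt_trans with (M * (-h)). apply Rmult_le_compat_r; unfold h in *; lra.
    apply Rlt_le_trans with (M * (eps / M)). apply Rmult_lt_compat_l; unfold h in *; lra.
    right; field; lra.
  - subst. rewrite Rminus_eq_0, Rabs_R0; auto.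
  - set (h := y - x). replace y with (x + h) by (unfold h; ring).
    rewrite Rabs_right in Hy by lra.
    specialize (K1 h ltac:(unfold h in *; lra)).
    apply Rabs_lt_between in K1.
    assert (Rabs ((f (x + h) - f x) / h) <= M).
    { apply Rabs_le. unfold M. pose proof (Rabs_pos a). split.
      pose proof (Rle_abs (-b)); rewrite Rabs_Ropp in *; lra. pose proof (Rle_abs b); lra. }
    replace (f (x + h) - f x) with (((f (x + h) - f x) / h) * h) by (field; unfold h in *; lra).
    rewrite Rabs_mult. rewrite (Rabs_right h) by (unfold h in *; lra).
    apply Rle_lt_trans with (M * h). apply Rmult_le_compat_r; unfold h in *; lra.
    apply Rlt_le_trans with (M * (eps / M)). apply Rmult_lt_compat_l; unfold h in *; lra.
    right; field; lra.
Qed.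

End P2.
Import P2.

Module P3.

Definition Kc (F : R -> R) (a b c : R) : Prop :=
  (forall q, b <= q <= a -> F q <= c) /\ (forall q, a <= q <= b -> c <= F q).

Lemma visc_from_local (F V : R -> R) lam w :
  (forall x0, exists a b, LD w x0 a /\ RD w x0 b /\ Kc F a b (V x0 + lam)) ->
  visc_sol F V lam w.
Proof.
  intros H. split; [|split].
  - intros x. destruct (H x) as [a [b [H1 [H2 _]]]]. eapply RLD_cont; eauto.
  - intros phi x0 [Hphi1 _] [del [Hdel Hm]].
    destruct (H x0) as [a [b [Ha [Hb [Kl _]]]]].
    pose proof (Derive_correct phi x0 (Hphi1 x0)) as Hd.
    destruct (derive_RLD _ _ _ Hd) as [Rp Lp].
    assert (R1 : RD (fun y => w y + - phi y) x0 (b + - Derive phi x0)) by (apply RD_plus; auto; apply neg_RD; auto).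
    assert (L1 : LD (fun y => w y + - phi y) x0 (a + - Derive phi x0)) by (apply LD_plus; auto; apply neg_LD; auto).
    apply RD_max in R1. apply LD_max in L1.
    + assert (F (Derive phi x0) <= V x0 + lam) by (apply Kl; lra). lra.
    + exists del; split; auto. intros h Hh. apply Hm. rewrite Rabs_left; lra.
    + exists del; split; auto. intros h Hh. apply Hm. rewrite Rabs_right; lra.
  - intros phi x0 [Hphi1 _] [del [Hdel Hm]].
    destruct (H x0) as [a [b [Ha [Hb [_ Kr]]]]].
    pose proof (Derive_correct phi x0 (Hphi1 x0)) as Hd.
    destruct (derive_RLD _ _ _ Hd) as [Rp Lp].
    assert (R1 : RD (fun y => phi y + - w y) x0 (Derive phi x0 + - b)) by (apply RD_plus; auto; apply neg_RD; auto).
    assert (L1 : LD (fun y => phi y + - w y) x0 (Derive phi x0 + - a)) by (apply LD_plus; auto; apply neg_LD; auto).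
    apply RD_max in R1. apply LD_max in L1.
    + assert (V x0 + lam <= F (Derive phi x0)) by (apply Kr; lra). lra.
    + exists del; split; auto. intros h Hh. assert (w x0 - phi x0 <= w (x0 + h) - phi (x0 + h)) by (apply Hm; rewrite Rabs_left; lra). lra.
    + exists del; split; auto. intros h Hh. assert (w x0 - phi x0 <= w (x0 + h) - phi (x0 + h)) by (apply Hm; rewrite Rabs_right; lra). lra.
Qed.

Definition wper (p : R) (w0 : R -> R) (x : R) : R := p * IZR (Int_part x) + w0 (frac_part x).

Lemma wper_eq p w0 (k : Z) y : IZR k <= y < IZR k + 1 -> wper p w0 y = p * IZR k + w0 (- IZR k + 1 * y).
Proof. intros H. destruct (ip_spec y k H) as [H1 H2]. unfold wper. rewrite H1, H2. f_equal. f_equal. ring. Qed.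

Lemma cell_from_w0 F s lam p w0 : 0 < s < 1 -> w0 1 = w0 0 + p ->
  (forall t, 0 < t < 1 -> exists a b, LD w0 t a /\ RD w0 t b /\ Kc F a b (V0 s t + lam)) ->
  (exists a b, LD w0 1 a /\ RD w0 0 b /\ Kc F a b lam) ->
  cell_solvable F s p lam.
Proof.
  intros Hs Hp Hint Hend. exists (wper p w0). split.
  - apply visc_from_local. intros x0.
    destruct (base_Int_part x0) as [B1 B2]. set (k := Int_part x0) in *.
    destruct (Req_dec x0 (IZR k)) as [E|E].
    + destruct Hend as [a [b [Ha [Hb K]]]]. exists a, b. split; [|split].
      * apply (LD_ext _ (fun y => p * (IZR k - 1) + w0 (- (IZR k - 1) + 1 * y))).
        { exists 1. split; [lra|]. intros y Hy. destruct (Req_dec y x0) as [->|Hne].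
          - rewrite (wper_eq p w0 k) by lra. rewrite E. replace (- IZR k + 1 * IZR k) with 0 by ring.
            replace (- (IZR k - 1) + 1 * IZR k) with 1 by ring. rewrite Hp. ring.
          - rewrite (wper_eq p w0 (k - 1)); rewrite minus_IZR; simpl; [reflexivity|lra]. }
        apply (LD_eq _ _ (0 + 1 * a)); [ring|]. apply LD_plus; [apply LD_const|].
        apply LD_aff_pos; [lra|]. replace (- (IZR k - 1) + 1 * x0) with 1 by lra. auto.
      * apply (RD_ext _ (fun y => p * IZR k + w0 (- IZR k + 1 * y))).
        { exists 1. split; [lra|]. intros y Hy. apply wper_eq. lra. }
        apply (RD_eq _ _ (0 + 1 * b)); [ring|]. apply RD_plus; [apply RD_const|].
        apply RD_aff_pos; [lra|]. replace (- IZR k + 1 * x0) with 0 by lra. auto.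
      * rewrite (Vr_shift s x0 k 0) by lra. unfold V0.
        rewrite Rmin_left. unfold Rdiv; rewrite Rmult_0_l, Rplus_0_l; auto.
        unfold Rdiv; rewrite Rmult_0_l. apply Rmult_le_pos; [lra|]. left; apply Rinv_0_lt_compat; lra.
    + set (t := x0 - IZR k).
      destruct (Hint t) as [a [b [Ha [Hb K]]]]. { unfold t. split; lra. }
      exists a, b. split; [|split].
      * apply (LD_ext _ (fun y => p * IZR k + w0 (- IZR k + 1 * y))).
        { exists t. split. unfold t; lra. intros y Hy. apply wper_eq. unfold t in *; lra. }
        apply (LD_eq _ _ (0 + 1 * a)); [ring|]. apply LD_plus; [apply LD_const|].
        apply LD_aff_pos; [lra|]. replace (- IZR k + 1 * x0) with t by (unfold t; ring). auto.
      * apply (RD_ext _ (fun y => p * IZR k + w0 (- IZR k + 1 * y))).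
        { exists (1 - t). split. unfold t; lra. intros y Hy. apply wper_eq. unfold t in *; lra. }
        apply (RD_eq _ _ (0 + 1 * b)); [ring|]. apply RD_plus; [apply RD_const|].
        apply RD_aff_pos; [lra|]. replace (- IZR k + 1 * x0) with t by (unfold t; ring). auto.
      * rewrite (Vr_shift s x0 k t); auto. unfold t; lra. unfold t; ring.
  - intros x. destruct (base_Int_part x) as [B1 B2]. set (k := Int_part x) in *.
    rewrite (wper_eq p w0 k x) by lra. rewrite (wper_eq p w0 (k + 1) (x + 1)) by (rewrite plus_IZR; simpl; lra).
    rewrite plus_IZR. simpl. replace (- (IZR k + 1) + 1 * (x + 1)) with (- IZR k + 1 * x) by ring. ring.
Qed.

End P3.
Import P3.

Module P4.

Lemma cplus (f g : R -> R) x : continuous f x -> continuous g x -> continuous (fun y => f y + g y) x.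
Proof. intros. exact (continuous_plus f g x H H0). Qed.
Lemma copp (f : R -> R) x : continuous f x -> continuous (fun y => - f y) x.
Proof. intros. exact (continuous_opp f x H). Qed.
Lemma sq_abs a : a ^ 2 = Rabs a * Rabs a.
Proof. rewrite <- Rabs_mult. rewrite Rabs_right. ring. apply Rle_ge. replace (a * a) with (a ^ 2) by ring. apply pow2_ge_0. Qed.
Lemma cder (f : R -> R) x : ex_derive f x -> continuous f x.
Proof. intros. exact (ex_derive_continuous f x H). Qed.
Lemma cpt (f : R -> R) x : continuous f x -> continuity_pt f x.
Proof. intros. apply continuity_pt_filterlim. auto. Qed.

Lemma per_nat (u : R -> R) : (forall x, u (x + 1) = u x) -> forall n x, u (x + INR n) = u x.
Proof.
  intros H n. induction n as [|n IH]; intros x. simpl. rewrite Rplus_0_r; auto.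
  rewrite S_INR. replace (x + (INR n + 1)) with ((x + INR n) + 1) by ring. rewrite H. auto.
Qed.

Lemma per_Z (u : R -> R) : (forall x, u (x + 1) = u x) -> forall k x, u (x + IZR k) = u x.
Proof.
  intros H k x. destruct (Z_le_gt_dec 0 k) as [Hk|Hk].
  - rewrite <- (Z2Nat.id k Hk). rewrite <- INR_IZR_INZ. apply per_nat; auto.
  - assert (E : IZR k = - INR (Z.to_nat (- k))).
    { rewrite INR_IZR_INZ, Z2Nat.id by lia. rewrite opp_IZR. ring. }
    rewrite E. rewrite <- (per_nat u H (Z.to_nat (-k)) (x + - INR (Z.to_nat (- k)))).
    f_equal; ring.
Qed.

Lemma per_bounded (u : R -> R) : (forall x, u (x + 1) = u x) -> (forall x, continuous u x) ->
  exists M, 0 <= M /\ forall x, Rabs (u x) <= M.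
Proof.
  intros H Hc.
  destruct (continuity_ab_maj u 0 1) as [x1 [Hx1 _]]; [lra| intros; apply cpt; auto|].
  destruct (continuity_ab_min u 0 1) as [x2 [Hx2 _]]; [lra| intros; apply cpt; auto|].
  exists (Rabs (u x1) + Rabs (u x2)). split. pose proof (Rabs_pos (u x1)); pose proof (Rabs_pos (u x2)); lra.
  intros x. destruct (base_Int_part x) as [B1 B2].
  replace x with (frac_part x + IZR (Int_part x)) by (unfold frac_part; ring).
  rewrite per_Z by auto. destruct (base_fp x).
  specialize (Hx1 (frac_part x) ltac:(lra)). specialize (Hx2 (frac_part x) ltac:(lra)).
  apply Rabs_le. pose proof (Rle_abs (u x1)). pose proof (Rle_abs (- u x2)). rewrite Rabs_Ropp in *.
  pose proof (Rabs_pos (u x1)). pose proof (Rabs_pos (u x2)). lra.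
Qed.

Section Uniq.
Variables (F : R -> R) (V : R -> R) (L p l1 l2 : R) (w1 w2 : R -> R).
Hypothesis HL : 0 < L.
Hypothesis HV : forall a b, Rabs (V a - V b) <= L * Rabs (a - b).
Hypothesis Hc1 : forall x, continuous w1 x.
Hypothesis Hc2 : forall x, continuous w2 x.
Hypothesis Hs1 : visc_subsol F V l1 w1.
Hypothesis Hs2 : visc_supersol F V l2 w2.
Hypothesis Hp1 : forall x, w1 (x + 1) - p * (x + 1) = w1 x - p * x.
Hypothesis Hp2 : forall x, w2 (x + 1) - p * (x + 1) = w2 x - p * x.

Lemma quad_C1 (a c : R) : C1 (fun x => c * (x - a) ^ 2) /\ forall x, Derive (fun x => c * (x - a) ^ 2) x = 2 * c * (x - a).
Proof.
  assert (D : forall x, is_derive (fun x => c * (x - a) ^ 2) x (2 * c * (x - a))).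
  { intros x. auto_derive; auto. ring. }
  split; [split|].
  - intros x. eexists; apply D.
  - intros x. apply (@continuous_ext R_UniformSpace R_UniformSpace (fun x => 2 * c * (x - a)) (Derive (fun x => c * (x - a) ^ 2)) x).
    intros y. symmetry. apply is_derive_unique, D.
    apply (ex_derive_continuous (fun x => 2 * c * (x - a))). auto_derive; auto.
  - intros x; apply is_derive_unique, D.
Qed.

Lemma uniq_le : l2 <= l1.
Proof.
  destruct (Rle_dec l2 l1) as [|Hn]; auto. exfalso.
  set (del := l2 - l1).
  assert (Hdel : 0 < del) by (unfold del; lra).
  set (u1 := fun x => w1 x - p * x). set (u2 := fun x => w2 x - p * x).
  assert (Pu1 : forall x, u1 (x + 1) = u1 x) by (intros; unfold u1; apply Hp1).
  assert (Pu2 : forall x, u2 (x + 1) = u2 x) by (intros; unfold u2; apply Hp2).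
  assert (Cu1 : forall x, continuous u1 x).
  { intros x. unfold u1. apply (cplus w1 (fun y => - (p * y))); auto. apply copp.
    apply cder. auto_derive; auto. }
  assert (Cu2 : forall x, continuous u2 x).
  { intros x. unfold u2. apply (cplus w2 (fun y => - (p * y))); auto. apply copp.
    apply cder. auto_derive; auto. }
  destruct (per_bounded u1 Pu1 Cu1) as [M1 [HM1 B1]].
  destruct (per_bounded u2 Pu2 Cu2) as [M2 [HM2 B2]].
  set (M := M1 + M2).
  set (eta := del / L).
  assert (Heta : 0 < eta) by (unfold eta; apply Rdiv_lt_0_compat; auto).
  set (c := (2 * M / eta + Rabs p) / eta + 1).
  assert (Hc : 0 < c).
  { unfold c. assert (0 <= 2 * M / eta) by (unfold M; apply Rmult_le_pos; [lra|left; apply Rinv_0_lt_compat; auto]).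
    assert (0 <= (2 * M / eta + Rabs p) / eta) by (apply Rmult_le_pos; [pose proof (Rabs_pos p); lra|left; apply Rinv_0_lt_compat; auto]). lra. }
  set (Phi := fun x y => w1 x - w2 y - c * (x - y) ^ 2).
  assert (PhiU : forall x y, Phi x y = u1 x - u2 y + p * (x - y) - c * (x - y) ^ 2).
  { intros; unfold Phi, u1, u2; ring. }
  assert (PhiS : forall x y k, Phi (x + IZR k) (y + IZR k) = Phi x y).
  { intros x y k. rewrite !PhiU. rewrite (per_Z u1 Pu1), (per_Z u2 Pu2). f_equal. f_equal. ring. ring. }
  set (K := 1 + (Rabs p + 4 * M) / c).
  assert (HK1 : 1 <= K).
  { unfold K. assert (0 <= (Rabs p + 4 * M) / c) by (apply Rmult_le_pos; [unfold M; pose proof (Rabs_pos p); lra|left; apply Rinv_0_lt_compat; auto]). lra. }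
  assert (Far : forall x y, K < Rabs (x - y) -> Phi x y < - 2 * M).
  { intros x y H. rewrite PhiU. set (d := Rabs (x - y)) in *.
    assert (cd : c * (d - 1) > Rabs p + 4 * M).
    { unfold K in H. assert ((Rabs p + 4 * M) / c < d - 1) by lra.
      apply (Rmult_lt_compat_l c) in H0; auto. unfold Rdiv in H0.
      replace (c * ((Rabs p + 4 * M) * / c)) with (Rabs p + 4 * M) in H0 by (field; lra). lra. }
    assert (sq : (x - y) ^ 2 = d * d) by (unfold d; apply sq_abs).
    assert (p * (x - y) <= Rabs p * d) by (unfold d; rewrite <- Rabs_mult; apply Rle_abs).
    specialize (B1 x). specialize (B2 y). apply Rabs_le_between in B1. apply Rabs_le_between in B2.
    rewrite sq. assert (c * d * d >= (Rabs p + 4 * M) * d + c * d).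
    { assert (c * d * (d - 1) >= (Rabs p + 4 * M) * d).
      { assert (0 <= d) by (unfold d; apply Rabs_pos). nra. } nra. }
    assert (0 < c * d) by (apply Rmult_lt_0_compat; auto; lra).
    unfold M in *. nra. }
  set (al := - K). set (be := 1 + K).
  set (G := fun x y => - w2 y - c * (x - y) ^ 2).
  assert (Gcont : forall x y, continuous (G x) y).
  { intros x y. unfold G. apply (cplus (fun y => - w2 y) (fun y => - (c * (x - y) ^ 2))).
    apply copp; auto. apply copp. apply cder. auto_derive; auto. }
  assert (Ex : forall x, exists y, al <= y <= be /\ forall y', al <= y' <= be -> G x y' <= G x y).
  { intros x. destruct (continuity_ab_maj (G x) al be) as [y [H1 H2]].
    unfold al, be; lra. intros; apply cpt; auto. exists y; auto. }
  set (ym := fun x => proj1_sig (constructive_indefinite_description _ (Ex x))).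
  assert (Hym : forall x, al <= ym x <= be /\ forall y', al <= y' <= be -> G x y' <= G x (ym x)).
  { intros x. unfold ym. destruct (constructive_indefinite_description _ (Ex x)); auto. }
  set (n := fun x => G x (ym x)).
  set (Lc := 4 + 2 * (Rabs al + Rabs be)).
  assert (HLc : 0 <= Lc) by (unfold Lc; pose proof (Rabs_pos al); pose proof (Rabs_pos be); lra).
  assert (Glip : forall x x' y, -1 <= x <= 2 -> -1 <= x' <= 2 -> al <= y <= be ->
     G x y <= G x' y + c * Lc * Rabs (x - x')).
  { intros x x' y Hx Hx' Hy. unfold G.
    assert (Rabs (x + x' - 2 * y) <= Lc).
    { unfold Lc. eapply Rle_trans. apply Rabs_triang. rewrite Rabs_Ropp.
      replace (Rabs (2 * y)) with (2 * Rabs y) by (rewrite Rabs_mult, (Rabs_right 2); lra).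
      assert (Rabs (x + x') <= 4) by (apply Rabs_le; lra).
      assert (Rabs y <= Rabs al + Rabs be) by (apply Rabs_le; pose proof (Rle_abs al); pose proof (Rle_abs be); pose proof (Rle_abs (-al)); pose proof (Rle_abs (-be)); rewrite Rabs_Ropp in *; lra).
      unfold Rminus. lra. }
    assert ((x' - y) ^ 2 - (x - y) ^ 2 <= Lc * Rabs (x - x')).
    { replace ((x' - y) ^ 2 - (x - y) ^ 2) with ((x' - x) * (x + x' - 2 * y)) by ring.
      eapply Rle_trans. apply Rle_abs. rewrite Rabs_mult, Rabs_minus_sym.
      rewrite Rmult_comm. apply Rmult_le_compat_r; auto. apply Rabs_pos. }
    assert (c * ((x' - y) ^ 2 - (x - y) ^ 2) <= c * (Lc * Rabs (x - x'))) by (apply Rmult_le_compat_l; lra).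
    nra. }
  assert (nlip : forall x x', -1 <= x <= 2 -> -1 <= x' <= 2 -> n x <= n x' + c * Lc * Rabs (x - x')).
  { intros x x' Hx Hx'. unfold n. eapply Rle_trans. apply Glip; eauto. apply Hym.
    apply Rplus_le_compat_r. apply Hym. apply Hym. }
  assert (ncont : forall x, 0 <= x <= 1 -> continuity_pt n x).
  { intros x Hx. unfold continuity_pt, continue_in, limit1_in, limit_in. simpl. intros e He.
    exists (Rmin 1 (e / (c * Lc + 1))). split.
    { apply Rmin_glb_lt; [lra|]. apply Rdiv_lt_0_compat; auto. nra. }
    intros y [_ Hy]. unfold dist in *; simpl in *; unfold R_dist in *.
    pose proof (Rmin_l 1 (e / (c * Lc + 1))). pose proof (Rmin_r 1 (e / (c * Lc + 1))).
    apply Rabs_lt_between in Hy as Hy'.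
    assert (Hyx : -1 <= y <= 2) by lra.
    pose proof (nlip x y ltac:(lra) Hyx). pose proof (nlip y x Hyx ltac:(lra)).
    assert (c * Lc * Rabs (y - x) < e).
    { apply Rle_lt_trans with ((c * Lc + 1) * Rabs (y - x)). assert (0 <= Rabs (y-x)) by apply Rabs_pos. nra.
      apply Rlt_le_trans with ((c * Lc + 1) * (e / (c * Lc + 1))).
      apply Rmult_lt_compat_l. nra. lra. right; field. nra. }
    apply Rabs_lt_between. rewrite Rabs_minus_sym in H1. lra. }
  destruct (continuity_ab_maj (fun x => w1 x + n x) 0 1) as [xs [Hxs Hxs01]].
  { lra. } { intros z Hz. apply continuity_pt_plus. apply cpt; auto. apply ncont; auto. }
  set (ys := ym xs).
  assert (Hys : al <= ys <= be) by apply Hym.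
  assert (Loc : forall x y, 0 <= x <= 1 -> al <= y <= be -> Phi x y <= Phi xs ys).
  { intros x y Hx Hy. specialize (Hxs x Hx).
    assert (G x y <= n x) by (apply Hym; auto). unfold Phi. unfold n, G in *. fold ys in Hxs. lra. }
  assert (P00 : Phi 0 0 >= - 2 * M).
  { rewrite PhiU. specialize (B1 0). specialize (B2 0). apply Rabs_le_between in B1. apply Rabs_le_between in B2. unfold M. lra. }
  assert (P00' : Phi 0 0 <= Phi xs ys) by (apply Loc; unfold al, be; lra).
  assert (Glob : forall x y, Phi x y <= Phi xs ys).
  { intros x y. destruct (base_Int_part x) as [B3 B4]. set (k := Int_part x) in *.
    rewrite <- (PhiS x y (- k)%Z). rewrite opp_IZR.
    destruct (Rle_dec al (y + - IZR k)) as [Ha|Ha]; [destruct (Rle_dec (y + - IZR k) be) as [Hb|Hb]|].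
    - apply Loc; lra.
    - assert (Phi (x + - IZR k) (y + - IZR k) < - 2 * M) by (apply Far; rewrite Rabs_left; unfold be in *; lra). lra.
    - assert (Phi (x + - IZR k) (y + - IZR k) < - 2 * M) by (apply Far; rewrite Rabs_right; unfold al in *; lra). lra. }
  set (q := 2 * c * (xs - ys)).
  destruct (quad_C1 ys c) as [C1a Da].
  assert (S1 : F q - V xs <= l1).
  { replace q with (Derive (fun x => c * (x - ys) ^ 2) xs) by (rewrite Da; unfold q; ring).
    apply Hs1; auto. exists 1. split; [lra|]. intros x _. pose proof (Glob x ys). unfold Phi in H. lra. }
  destruct (quad_C1 xs (- c)) as [C1b Db].
  assert (S2 : F q - V ys >= l2).
  { replace q with (Derive (fun y => - c * (y - xs) ^ 2) ys) by (rewrite Db; unfold q; ring).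
    apply Hs2; auto. exists 1. split; [lra|]. intros y _. pose proof (Glob xs y). unfold Phi in H.
    replace ((xs - y) ^ 2) with ((y - xs) ^ 2) in H by ring. replace ((xs - ys) ^ 2) with ((ys - xs) ^ 2) in H by ring. lra. }
  set (d := Rabs (xs - ys)).
  assert (Hd1 : eta <= d).
  { pose proof (HV xs ys). fold d in H. assert (del <= L * d) by (pose proof (Rle_abs (V xs - V ys)); unfold del; lra).
    unfold eta. apply (Rmult_le_reg_l L); auto. unfold Rdiv. replace (L * (del * / L)) with del by (field; lra). lra. }
  assert (Hd2 : c * d * d <= 2 * M + Rabs p * d).
  { pose proof (Glob xs xs). rewrite !PhiU in H.
    assert (sq : (xs - ys) ^ 2 = d * d) by (unfold d; apply sq_abs).
    replace ((xs - xs) ^ 2) with 0 in H by ring. rewrite sq in H.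
    assert (p * (xs - ys) <= Rabs p * d) by (unfold d; rewrite <- Rabs_mult; apply Rle_abs).
    specialize (B2 xs) as B2a. specialize (B2 ys) as B2b. apply Rabs_le_between in B2a. apply Rabs_le_between in B2b.
    unfold M. lra. }
  assert (c * eta > 2 * M / eta + Rabs p).
  { unfold c. replace (((2 * M / eta + Rabs p) / eta + 1) * eta) with (2 * M / eta + Rabs p + eta) by (field; lra). lra. }
  assert (c * d <= 2 * M / d + Rabs p).
  { apply (Rmult_le_reg_r d). lra. unfold Rdiv. replace ((2 * M * / d + Rabs p) * d) with (2 * M + Rabs p * d) by (field; lra). lra. }
  assert (2 * M / d <= 2 * M / eta).
  { unfold Rdiv. apply Rmult_le_compat_l. unfold M; lra. apply Rinv_le_contravar; lra. }
  assert (c * eta <= c * d) by (apply Rmult_le_compat_l; lra).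
  lra.
Qed.
End Uniq.

Lemma cell_unique F s p l1 l2 : 0 < s < 1 -> cell_solvable F s p l1 -> cell_solvable F s p l2 -> l1 = l2.
Proof.
  intros Hs [w1 [[C1 [S1 T1]] P1]] [w2 [[C2 [S2 T2]] P2]].
  assert (HL : 0 < Lip s) by (pose proof (Lip_ge1 s Hs); lra).
  apply Rle_antisym.
  - apply (uniq_le F (Vr s) (Lip s) p l2 l1 w2 w1); auto. intros; apply Vr_lip; auto.
  - apply (uniq_le F (Vr s) (Lip s) p l1 l2 w1 w2); auto. intros; apply Vr_lip; auto.
Qed.

Lemma Hbar_eq F s p lam : 0 < s < 1 -> cell_solvable F s p lam -> Hbar F s p = lam.
Proof.
  intros Hs H. unfold Hbar.
  apply (cell_unique F s p); auto.
  apply (epsilon_spec (inhabits 0) (fun lam => cell_solvable F s p lam)). exists lam; auto.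
Qed.

End P4.
Import P4.

Module P5.

Lemma C1_neg (phi : R -> R) : C1 phi -> C1 (fun y => phi (- y)) /\ forall y, Derive (fun y => phi (- y)) y = - Derive phi (- y).
Proof.
  intros [H1 H2].
  assert (D : forall y, is_derive (fun y => phi (- y)) y (- Derive phi (- y))).
  { intros y. pose proof (Derive_correct phi (- y) (H1 (- y))).
    assert (is_derive (fun y : R => - y) y (-1)) by (auto_derive; auto; ring).
    pose proof (is_derive_comp phi (fun y => - y) y _ _ H H0). simpl in H3.
    replace (- Derive phi (- y)) with (scal (-1) (Derive phi (- y))); auto.
    unfold scal; simpl; unfold mult; simpl; ring. }
  split; [split|].
  - intros y; eexists; apply D.
  - intros y. apply (@continuous_ext R_UniformSpace R_UniformSpace (fun y => - Derive phi (- y))).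
    intros z. symmetry. apply is_derive_unique, D.
    apply (copp (fun y => Derive phi (- y))).
    apply (continuous_comp (fun y : R => - y) (Derive phi)). apply cder. auto_derive; auto. apply H2.
  - intros y; apply is_derive_unique, D.
Qed.

Lemma cell_reflect F s p lam : (forall x, F (- x) = F x) -> 0 < s < 1 ->
  cell_solvable F s p lam -> cell_solvable F (1 - s) (- p) lam.
Proof.
  intros Fe Hs [w [[Hc [Hsub Hsup]] Hp]].
  exists (fun x => w (- x)). split; [split; [|split]|].
  - intros x. apply (continuous_comp (fun y : R => - y) w). apply cder. auto_derive; auto. apply Hc.
  - intros phi x0 Hphi [d [Hd Hm]]. destruct (C1_neg phi Hphi) as [C Dn].
    assert (F (Derive (fun y => phi (- y)) (- x0)) - Vr s (- x0) <= lam).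
    { apply Hsub; auto. exists d. split; auto. intros y Hy. rewrite Ropp_involutive.
      replace (w y - phi (- y)) with (w (- - y) - phi (- y)) by (rewrite Ropp_involutive; auto).
      apply Hm. replace (- y - x0) with (- (y - - x0)) by ring. rewrite Rabs_Ropp. auto. }
    rewrite Dn, Ropp_involutive, Fe, Vr_sym in H; auto.
  - intros phi x0 Hphi [d [Hd Hm]]. destruct (C1_neg phi Hphi) as [C Dn].
    assert (F (Derive (fun y => phi (- y)) (- x0)) - Vr s (- x0) >= lam).
    { apply Hsup; auto. exists d. split; auto. intros y Hy. rewrite Ropp_involutive.
      replace (w y - phi (- y)) with (w (- - y) - phi (- y)) by (rewrite Ropp_involutive; auto).
      apply Hm. replace (- y - x0) with (- (y - - x0)) by ring. rewrite Rabs_Ropp. auto. }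
    rewrite Dn, Ropp_involutive, Fe, Vr_sym in H; auto.
  - intros x. pose proof (Hp (- x - 1)).
    replace (- x - 1 + 1) with (- x) in H by ring. replace (- (x + 1)) with (- x - 1) by ring. lra.
Qed.

Lemma cell_reflect_iff F s p lam : (forall x, F (- x) = F x) -> 0 < s < 1 ->
  cell_solvable F s p lam <-> cell_solvable F (1 - s) (- p) lam.
Proof.
  intros Fe Hs. split. apply cell_reflect; auto.
  intros H. apply cell_reflect in H; auto. 2: lra.
  replace (1 - (1 - s)) with s in H by ring. rewrite Ropp_involutive in H. auto.
Qed.

Lemma Hbar_reflect F s p : (forall x, F (- x) = F x) -> 0 < s < 1 ->
  Hbar F s p = Hbar F (1 - s) (- p).
Proof.
  intros Fe Hs. unfold Hbar.
  assert (E : (fun lam => cell_solvable F s p lam) = (fun lam => cell_solvable F (1 - s) (- p) lam)).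
  { apply functional_extensionality. intros lam. apply propositional_extensionality. apply cell_reflect_iff; auto. }
  rewrite E. reflexivity.
Qed.

End P5.
Import P5.

Module P6.

Definition clamp (c d y : R) := Rmax c (Rmin y d).

Lemma clamp_in c d y : c <= d -> c <= clamp c d y <= d.
Proof. intros. unfold clamp, Rmax, Rmin. repeat destruct Rle_dec; lra. Qed.
Lemma clamp_id c d y : c <= y <= d -> clamp c d y = y.
Proof. intros. unfold clamp, Rmax, Rmin. repeat destruct Rle_dec; lra. Qed.
Lemma clamp_lip c d y y' : c <= d -> Rabs (clamp c d y - clamp c d y') <= Rabs (y - y').
Proof. intros. unfold clamp, Rmax, Rmin. apply Rabs_le. pose proof (Rle_abs (y - y')). pose proof (Rle_abs (-(y - y'))). rewrite Rabs_Ropp in *. repeat destruct Rle_dec; lra. Qed.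
Lemma clamp_mono c d y y' : c <= d -> y <= y' -> clamp c d y <= clamp c d y'.
Proof. intros. unfold clamp, Rmax, Rmin. repeat destruct Rle_dec; lra. Qed.
Lemma clamp_diff c d y y' : c <= d -> y <= y' -> clamp c d y' - clamp c d y <= y' - y.
Proof. intros. unfold clamp, Rmax, Rmin. repeat destruct Rle_dec; lra. Qed.
Lemma clamp_top c d y y' : c <= d -> clamp c d y = d -> y <= y' -> clamp c d y' = d.
Proof. intros. unfold clamp, Rmax, Rmin in *. repeat destruct Rle_dec; lra. Qed.
Lemma clamp_bot c d y y' : c <= d -> clamp c d y = c -> y' <= y -> clamp c d y' = c.
Proof. intros. unfold clamp, Rmax, Rmin in *. repeat destruct Rle_dec; lra. Qed.

Section InvCont.
Variables (f g : R -> R) (a b c d : R).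
Hypothesis Hcd : c <= d.
Hypothesis Hf : forall x y, a <= x -> x < y -> y <= b -> f x < f y.
Hypothesis Hg : forall y, c <= y <= d -> a <= g y <= b /\ f (g y) = y.

Lemma f_le x y : a <= x -> x <= y -> y <= b -> f x <= f y.
Proof. intros. destruct (Req_dec x y). subst; lra. left; apply Hf; lra. Qed.

Lemma g_mono u v : c <= u -> u < v -> v <= d -> g u < g v.
Proof.
  intros. destruct (Hg u) as [[A1 A2] A3]; [lra|]. destruct (Hg v) as [[B1 B2] B3]; [lra|].
  destruct (Rlt_dec (g u) (g v)) as [|n]; auto. exfalso.
  assert (f (g v) <= f (g u)) by (apply f_le; lra). lra.
Qed.
Lemma g_le u v : c <= u -> u <= v -> v <= d -> g u <= g v.
Proof. intros. destruct (Req_dec u v). subst; lra. left; apply g_mono; lra. Qed.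

Lemma g_below u x : c <= u <= d -> a <= x <= b -> u < f x -> g u < x.
Proof.
  intros. destruct (Hg u) as [[A1 A2] A3]; auto. destruct (Rlt_dec (g u) x) as [|n]; auto. exfalso.
  assert (f x <= f (g u)) by (apply f_le; lra). lra.
Qed.
Lemma g_above u x : c <= u <= d -> a <= x <= b -> f x < u -> x < g u.
Proof.
  intros. destruct (Hg u) as [[A1 A2] A3]; auto. destruct (Rlt_dec x (g u)) as [|n]; auto. exfalso.
  assert (f (g u) <= f x) by (apply f_le; lra). lra.
Qed.

Lemma inv_cont y0 : continuity_pt (fun y => g (clamp c d y)) y0.
Proof.
  unfold continuity_pt, continue_in, limit1_in, limit_in. simpl. intros eps He.
  set (u0 := clamp c d y0).
  assert (Hu0 : c <= u0 <= d) by (apply clamp_in; auto).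
  destruct (Hg u0 Hu0) as [[X1 X2] X3]. set (x0 := g u0) in *.
  assert (Up : exists d1, 0 < d1 /\ forall y, y0 <= y < y0 + d1 -> g (clamp c d y) < x0 + eps).
  { destruct (Req_dec u0 d) as [E|E].
    - exists 1. split; [lra|]. intros y Hy. rewrite (clamp_top c d y0 y); auto; try lra.
      fold x0. rewrite <- E. fold x0. lra.
    - assert (Hgd : x0 < g d) by (apply g_mono; lra).
      destruct (Hg d) as [[D1 D2] D3]; [lra|].
      set (x1 := Rmin (x0 + eps / 2) (g d)).
      assert (Hx1 : x0 < x1 <= g d /\ x1 <= x0 + eps/2).
      { unfold x1, Rmin. destruct Rle_dec; lra. }
      assert (Hfx1 : u0 < f x1) by (rewrite <- X3; apply Hf; lra).
      exists (f x1 - u0). split; [lra|]. intros y Hy.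
      assert (clamp c d y - u0 <= y - y0) by (apply clamp_diff; lra).
      assert (g (clamp c d y) < x1). { apply g_below. apply clamp_in; auto. lra. lra. }
      lra. }
  assert (Lo : exists d2, 0 < d2 /\ forall y, y0 - d2 < y <= y0 -> x0 - eps < g (clamp c d y)).
  { destruct (Req_dec u0 c) as [E|E].
    - exists 1. split; [lra|]. intros y Hy. rewrite (clamp_bot c d y0 y); auto; try lra.
      rewrite <- E. fold x0. lra.
    - assert (Hgc : g c < x0) by (apply g_mono; lra).
      destruct (Hg c) as [[D1 D2] D3]; [lra|].
      set (x1 := Rmax (x0 - eps / 2) (g c)).
      assert (Hx1 : g c <= x1 < x0 /\ x0 - eps/2 <= x1).
      { unfold x1, Rmax. destruct Rle_dec; lra. }
      assert (Hfx1 : f x1 < u0) by (rewrite <- X3; apply Hf; lra).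
      exists (u0 - f x1). split; [lra|]. intros y Hy.
      assert (u0 - clamp c d y <= y0 - y) by (apply clamp_diff; lra).
      assert (x1 < g (clamp c d y)). { apply g_above. apply clamp_in; auto. lra. lra. }
      lra. }
  destruct Up as [d1 [Hd1 U]]. destruct Lo as [d2 [Hd2 L]].
  exists (Rmin d1 d2). split. apply Rmin_glb_lt; auto.
  intros y [_ Hy]. unfold dist in *; simpl in *; unfold R_dist in *.
  pose proof (Rmin_l d1 d2). pose proof (Rmin_r d1 d2).
  apply Rabs_lt_between in Hy.
  destruct (Rle_dec y0 y).
  - assert (g (clamp c d y) < x0 + eps) by (apply U; lra).
    assert (x0 <= g (clamp c d y)) by (apply g_le; try apply clamp_in; auto; apply clamp_mono; auto).
    apply Rabs_lt_between. fold u0 x0. lra.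
  - assert (x0 - eps < g (clamp c d y)) by (apply L; lra).
    assert (g (clamp c d y) <= x0) by (apply g_le; try apply clamp_in; auto; apply clamp_mono; lra).
    apply Rabs_lt_between. fold u0 x0. lra.
Qed.
End InvCont.

End P6.
Import P6.

Module P7.

Section FH.
Variables (F : R -> R) (th1 th2 th3 : R) (psi1 psi3 : R -> R).
Hypothesis HF : F_hyp F th1 th2 th3.
Hypothesis H1 : psi1_spec F psi1 th1.
Hypothesis H3 : psi3_spec F psi3 th2.

Lemma F_cont x : continuous F x.
Proof. destruct HF as [D _]. apply cder. exact (D 1%nat x). Qed.
Lemma F_even x : F (- x) = F x.
Proof. destruct HF as (_ & E & _). auto. Qed.
Lemma th_ord : 0 < th3 < th2 /\ th2 < th1.
Proof. destruct HF as (_ & _ & A & B & _). auto. Qed.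
Lemma F_vals : F 0 = 0 /\ F th2 = 1/2 /\ F th1 = 1/3 /\ F th3 = 1/3.
Proof. destruct HF as (_ & _ & _ & _ & A & B & C & D & _). auto. Qed.
Lemma F_lo x y : 0 <= x -> x < y -> y <= th2 -> F x < F y.
Proof. destruct HF as (_ & _ & _ & _ & _ & _ & _ & _ & _ & A & _). auto. Qed.
Lemma F_hi x y : th1 <= x -> x < y -> F x < F y.
Proof. destruct HF as (_ & _ & _ & _ & _ & _ & _ & _ & _ & _ & A & _). auto. Qed.
Lemma F_mid x y : th2 <= x -> x < y -> y <= th1 -> F y < F x.
Proof. destruct HF as (_ & _ & _ & _ & _ & _ & _ & _ & _ & _ & _ & A). auto. Qed.
Lemma F_coerc M : exists N, forall x, N <= x -> M <= F x.
Proof. destruct HF as (_ & _ & _ & _ & _ & _ & _ & _ & A & _). auto. Qed.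

Lemma F_lo_le x y : 0 <= x -> x <= y -> y <= th2 -> F x <= F y.
Proof. intros. destruct (Req_dec x y). subst; lra. left; apply F_lo; lra. Qed.
Lemma F_hi_le x y : th1 <= x -> x <= y -> F x <= F y.
Proof. intros. destruct (Req_dec x y). subst; lra. left; apply F_hi; lra. Qed.
Lemma F_mid_le x y : th2 <= x -> x <= y -> y <= th1 -> F y <= F x.
Proof. intros. destruct (Req_dec x y). subst; lra. left; apply F_mid; lra. Qed.

Lemma F_abs q : F q = F (Rabs q).
Proof. unfold Rabs. destruct Rcase_abs; auto. rewrite F_even; auto. Qed.

Definition psi2 (y : R) : R := epsilon (inhabits 0) (fun z => th2 <= z <= th1 /\ F z = y).

Lemma psi2_spec y : 1/3 <= y <= 1/2 -> th2 <= psi2 y <= th1 /\ F (psi2 y) = y.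
Proof.
  intros Hy. unfold psi2. apply (epsilon_spec (inhabits 0) (fun z => th2 <= z <= th1 /\ F z = y)).
  destruct th_ord. destruct F_vals as (A & B & C & D).
  destruct (IVT_cor (fun x => F x - y) th2 th1) as [z [Hz1 Hz2]].
  - intros x. apply continuity_pt_minus. apply cpt, F_cont. apply continuity_pt_const. intros ? ?; auto.
  - lra.
  - rewrite B, C. nra.
  - exists z. split; auto. lra.
Qed.

Lemma psi1_uniq x y : 1/3 <= y -> th1 <= x -> F x = y -> x = psi1 y.
Proof.
  intros Hy Hx E. destruct (H1 y Hy) as [A B].
  destruct (Rtotal_order x (psi1 y)) as [L|[L|L]]; auto.
  - pose proof (F_hi x (psi1 y) Hx L). lra.
  - pose proof (F_hi (psi1 y) x A L). lra.
Qed.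
Lemma psi3_uniq x y : 0 <= y <= 1/2 -> 0 <= x <= th2 -> F x = y -> x = psi3 y.
Proof.
  intros Hy Hx E. destruct (H3 y Hy) as [A B].
  destruct (Rtotal_order x (psi3 y)) as [L|[L|L]]; auto.
  - pose proof (F_lo x (psi3 y) ltac:(lra) L ltac:(lra)). lra.
  - pose proof (F_lo (psi3 y) x ltac:(lra) L ltac:(lra)). lra.
Qed.
Lemma psi2_uniq x y : 1/3 <= y <= 1/2 -> th2 <= x <= th1 -> F x = y -> x = psi2 y.
Proof.
  intros Hy Hx E. destruct (psi2_spec y Hy) as [A B].
  destruct (Rtotal_order x (psi2 y)) as [L|[L|L]]; auto.
  - pose proof (F_mid x (psi2 y) ltac:(lra) L ltac:(lra)). lra.
  - pose proof (F_mid (psi2 y) x ltac:(lra) L ltac:(lra)). lra.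
Qed.

Lemma psi_vals : psi3 0 = 0 /\ psi3 (1/3) = th3 /\ psi3 (1/2) = th2 /\ psi1 (1/3) = th1 /\
  psi2 (1/3) = th1 /\ psi2 (1/2) = th2.
Proof.
  destruct th_ord. destruct F_vals as (A & B & C & D).
  repeat split; symmetry.
  - apply psi3_uniq; lra.
  - apply psi3_uniq; lra.
  - apply psi3_uniq; lra.
  - apply psi1_uniq; lra.
  - apply psi2_uniq; lra.
  - apply psi2_uniq; lra.
Qed.

Definition b3 (y : R) := psi3 (clamp 0 (1/2) y).
Definition b2 (y : R) := psi2 (clamp (1/3) (1/2) y).
Definition b1 (y : R) := psi1 (Rmax (1/3) y).

Lemma b3_cont y : continuous b3 y.
Proof.
  apply continuity_pt_filterlim. unfold b3.
  apply (inv_cont F psi3 0 th2 0 (1/2)). lra. intros; apply F_lo; lra.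
  intros; apply H3; auto.
Qed.

Lemma b2_cont y : continuous b2 y.
Proof.
  apply continuity_pt_filterlim. unfold b2.
  assert (continuity_pt (fun y => - psi2 (clamp (1/3) (1/2) y)) y).
  { apply (inv_cont (fun x => F (- x)) (fun y => - psi2 y) (- th1) (- th2) (1/3) (1/2)). lra.
    intros x z Hx Hxz Hz. apply F_mid; lra.
    intros z Hz. destruct (psi2_spec z Hz). split. lra. rewrite Ropp_involutive; auto. }
  apply continuity_pt_opp in H. eapply continuity_pt_ext. 2: exact H. intros; unfold opp_fct; simpl; ring.
Qed.

Lemma b1_cont y : continuous b1 y.
Proof.
  set (D := Rmax (1/3) y + 1).
  assert (HD : 1/3 <= D) by (unfold D; pose proof (Rmax_l (1/3) y); lra).
  assert (C : continuity_pt (fun z => psi1 (clamp (1/3) D z)) y).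
  { apply (inv_cont F psi1 th1 (psi1 D) (1/3) D). auto. intros; apply F_hi; lra.
    intros z Hz. destruct (H1 z) as [A B]; [lra|]. split; auto. split; auto.
    destruct (Req_dec z D). subst; lra.
    destruct (Rle_dec (psi1 z) (psi1 D)); auto. exfalso.
    destruct (H1 D) as [A' B']; auto. pose proof (F_hi (psi1 D) (psi1 z) A' ltac:(lra)). lra. }
  apply continuity_pt_filterlim in C.
  apply (continuous_ext_loc _ (fun z => psi1 (clamp (1/3) D z))); auto.
  exists (mkposreal 1 Rlt_0_1). intros z Hz. unfold ball in Hz; simpl in Hz. unfold AbsRing_ball, abs, minus, plus, opp in Hz; simpl in Hz.
  apply Rabs_lt_between in Hz. unfold b1, clamp. f_equal. unfold D in *.
  unfold Rmax, Rmin in *. repeat destruct Rle_dec; lra.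
Qed.

Lemma KF1 u q : 0 <= u <= 1/2 -> Rabs q <= psi3 u -> F q <= u.
Proof.
  intros Hu Hq. destruct (H3 u Hu) as [A B]. rewrite F_abs.
  apply Rle_trans with (F (psi3 u)); [|lra]. apply F_lo_le; try lra. apply Rabs_pos.
Qed.
Lemma KF2 t q : 1/2 <= t -> Rabs q <= psi1 t -> F q <= t.
Proof.
  intros Ht Hq. destruct (H1 t) as [A B]; [lra|]. rewrite F_abs. destruct th_ord.
  destruct F_vals as (V0' & V2 & V1 & V3). pose proof (Rabs_pos q).
  destruct (Rle_dec (Rabs q) th2).
  - apply Rle_trans with (F th2). apply F_lo_le; lra. lra.
  - destruct (Rle_dec (Rabs q) th1).
    + apply Rle_trans with (F th2). apply F_mid_le; lra. lra.
    + apply Rle_trans with (F (psi1 t)); [apply F_hi_le; lra | lra].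
Qed.
Lemma KF3 u q : 1/3 <= u <= 1/2 -> psi3 u <= Rabs q <= psi2 u -> u <= F q.
Proof.
  intros Hu Hq. destruct (H3 u) as [A B]; [lra|]. destruct (psi2_spec u Hu) as [C D].
  rewrite F_abs. destruct (Rle_dec (Rabs q) th2).
  - apply Rle_trans with (F (psi3 u)); [lra | apply F_lo_le; lra].
  - apply Rle_trans with (F (psi2 u)); [lra | apply F_mid_le; lra].
Qed.
Lemma KF4 u q : 1/3 <= u <= 1/2 -> psi2 u <= Rabs q <= psi1 u -> F q <= u.
Proof.
  intros Hu Hq. destruct (H1 u) as [A B]; [lra|]. destruct (psi2_spec u Hu) as [C D].
  rewrite F_abs. destruct (Rle_dec (Rabs q) th1).
  - apply Rle_trans with (F (psi2 u)); [apply F_mid_le; lra | lra].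
  - apply Rle_trans with (F (psi1 u)); [apply F_hi_le; lra | lra].
Qed.
Lemma KF5 q : th3 <= Rabs q <= th1 -> 1/3 <= F q.
Proof.
  intros Hq. rewrite F_abs. destruct th_ord. destruct F_vals as (V0' & V2 & V1 & V3).
  destruct (Rle_dec (Rabs q) th2).
  - rewrite <- V3. apply F_lo_le; lra.
  - rewrite <- V1. apply F_mid_le; lra.
Qed.

Lemma F_nonneg q : 0 <= F q.
Proof.
  rewrite F_abs. destruct th_ord. destruct F_vals as (V0' & V2 & V1 & V3). pose proof (Rabs_pos q).
  destruct (Rle_dec (Rabs q) th2).
  - rewrite <- V0'. apply F_lo_le; lra.
  - destruct (Rle_dec (Rabs q) th1).
    + apply Rle_trans with (F th1). lra. apply F_mid_le; lra.
    + apply Rle_trans with (F th1). lra. apply F_hi_le; lra.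
Qed.

End FH.

End P7.
Import P7.

Module P8.

Record Pc := mkPc { pB : R -> R; pb : R -> R; pa : R; pz : R }.

Definition piece (P : Pc) (l : R) := pB P (clamp (pa P) (pz P) l) - pB P (pa P).
Definition RVp (P : Pc) (l : R) := if Rle_dec (pa P) l then if Rlt_dec l (pz P) then pb P l else 0 else 0.
Definition LVp (P : Pc) (l : R) := if Rlt_dec (pa P) l then if Rle_dec l (pz P) then pb P l else 0 else 0.

Definition goodP (P : Pc) := pa P <= pz P /\ forall x, is_derive (pB P) x (pb P x).

Lemma piece_RD P l : goodP P -> RD (piece P) l (RVp P l).
Proof.
  intros [Hab HD]. unfold RVp, piece. destruct (Rle_dec (pa P) l) as [h1|h1]; [destruct (Rlt_dec l (pz P)) as [h2|h2]|].
  - apply (RD_ext _ (fun y => pB P y - pB P (pa P))).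
    { exists (pz P - l). split; [lra|]. intros y Hy. rewrite clamp_id; auto; lra. }
    apply (RD_eq _ _ (pb P l + - 0)); [ring|]. apply RD_plus. apply (derive_RLD _ _ _ (HD l)).
    apply neg_RD. apply RD_const.
  - apply (RD_ext _ (fun y => pB P (pz P) - pB P (pa P))).
    { exists 1. split; [lra|]. intros y Hy. unfold clamp, Rmax, Rmin. repeat destruct Rle_dec; try lra; first [reflexivity | (f_equal; f_equal; lra)]. }
    apply RD_const.
  - apply (RD_ext _ (fun y => pB P (pa P) - pB P (pa P))).
    { exists (pa P - l). split; [lra|]. intros y Hy. unfold clamp, Rmax, Rmin. repeat destruct Rle_dec; try lra; first [reflexivity | (f_equal; f_equal; lra)]. }
    apply RD_const.
Qed.

Lemma piece_LD P l : goodP P -> LD (piece P) l (LVp P l).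
Proof.
  intros [Hab HD]. unfold LVp, piece. destruct (Rlt_dec (pa P) l) as [h1|h1]; [destruct (Rle_dec l (pz P)) as [h2|h2]|].
  - apply (LD_ext _ (fun y => pB P y - pB P (pa P))).
    { exists (l - pa P). split; [lra|]. intros y Hy. rewrite clamp_id; auto; lra. }
    apply (LD_eq _ _ (pb P l + - 0)); [ring|]. apply LD_plus. apply (derive_RLD _ _ _ (HD l)).
    apply neg_LD. apply LD_const.
  - apply (LD_ext _ (fun y => pB P (pz P) - pB P (pa P))).
    { exists (l - pz P). split; [lra|]. intros y Hy. unfold clamp, Rmax, Rmin. repeat destruct Rle_dec; try lra; first [reflexivity | (f_equal; f_equal; lra)]. }
    apply LD_const.
  - apply (LD_ext _ (fun y => pB P (pa P) - pB P (pa P))).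
    { exists 1. split; [lra|]. intros y Hy. unfold clamp, Rmax, Rmin. repeat destruct Rle_dec; try lra; first [reflexivity | (f_equal; f_equal; lra)]. }
    apply LD_const.
Qed.

Fixpoint Prim (ps : list Pc) (l : R) : R :=
  match ps with nil => 0 | P :: ps' => piece P l + Prim ps' l end.
Fixpoint RVal (ps : list Pc) (l : R) : R :=
  match ps with nil => 0 | P :: ps' => RVp P l + RVal ps' l end.
Fixpoint LVal (ps : list Pc) (l : R) : R :=
  match ps with nil => 0 | P :: ps' => LVp P l + LVal ps' l end.

Lemma Prim_RD ps l : List.Forall goodP ps -> RD (Prim ps) l (RVal ps l).
Proof.
  induction ps as [|P ps IH]; intros H; simpl. apply RD_const.
  inversion H; subst. apply (RD_plus (piece P) (Prim ps)). apply piece_RD; auto. apply IH; auto.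
Qed.
Lemma Prim_LD ps l : List.Forall goodP ps -> LD (Prim ps) l (LVal ps l).
Proof.
  induction ps as [|P ps IH]; intros H; simpl. apply LD_const.
  inversion H; subst. apply (LD_plus (piece P) (Prim ps)). apply piece_LD; auto. apply IH; auto.
Qed.

Lemma Prim_bot ps l : List.Forall (fun P => l <= pa P /\ pa P <= pz P) ps -> Prim ps l = 0.
Proof.
  induction ps as [|P ps IH]; intros H; simpl; auto. inversion H; subst.
  rewrite IH; auto. unfold piece. destruct H2.
  assert (E : clamp (pa P) (pz P) l = pa P) by (unfold clamp, Rmax, Rmin; repeat destruct Rle_dec; lra).
  rewrite E; ring.
Qed.

Lemma Prim_top ps l : List.Forall (fun P => pz P <= l /\ pa P <= pz P) ps ->
  Prim ps l = fold_right (fun P acc => pB P (pz P) - pB P (pa P) + acc) 0 ps.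
Proof.
  induction ps as [|P ps IH]; intros H; simpl; auto. inversion H; subst.
  rewrite IH; auto. unfold piece. destruct H2.
  assert (E : clamp (pa P) (pz P) l = pz P) by (unfold clamp, Rmax, Rmin; repeat destruct Rle_dec; lra).
  rewrite E; ring.
Qed.

Section Config.
Variables (F : R -> R) (s lam : R) (PI PD : list Pc).
Hypothesis Hs : 0 < s < 1.
Hypothesis GI : List.Forall goodP PI.
Hypothesis GD : List.Forall goodP PD.
Hypothesis BI : List.Forall (fun P => lam <= pa P /\ pa P <= pz P) PI.
Hypothesis BD : List.Forall (fun P => lam <= pa P /\ pa P <= pz P) PD.
Hypothesis Ci : forall l, lam < l < lam + 1 -> Kc F (LVal PI l) (RVal PI l) l.
Hypothesis Cd : forall l, lam < l < lam + 1 -> Kc F (RVal PD l) (LVal PD l) l.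
Hypothesis Ct : Kc F (LVal PI (lam + 1)) (LVal PD (lam + 1)) (lam + 1).
Hypothesis Cb : Kc F (RVal PD lam) (RVal PI lam) lam.

Definition Ktop := s * Prim PI (lam + 1) + (1 - s) * Prim PD (lam + 1).
Definition aD := lam + / (1 - s).
Definition kD := - / (1 - s).
Definition winc (y : R) := s * Prim PI (lam + / s * y).
Definition wdec (y : R) := Ktop + - (1 - s) * Prim PD (aD + kD * y).
Definition w0c (y : R) := if Rle_dec y s then winc y else wdec y.

Lemma inc_LD t : LD winc t (LVal PI (lam + / s * t)).
Proof.
  unfold winc. apply (LD_eq _ _ (s * (/ s * LVal PI (lam + / s * t)))). field; lra.
  apply LD_scal. apply LD_aff_pos. apply Rinv_0_lt_compat; lra. apply Prim_LD; auto.
Qed.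
Lemma inc_RD t : RD winc t (RVal PI (lam + / s * t)).
Proof.
  unfold winc. apply (RD_eq _ _ (s * (/ s * RVal PI (lam + / s * t)))). field; lra.
  apply RD_scal. apply RD_aff_pos. apply Rinv_0_lt_compat; lra. apply Prim_RD; auto.
Qed.
Lemma dec_LD t : LD wdec t (RVal PD (aD + kD * t)).
Proof.
  unfold wdec. apply (LD_eq _ _ (0 + - (1 - s) * (kD * RVal PD (aD + kD * t)))). unfold kD; field; lra.
  apply (LD_plus (fun _ => Ktop)). apply LD_const.
  apply LD_scal. apply LD_aff_neg. unfold kD. assert (0 < / (1 - s)) by (apply Rinv_0_lt_compat; lra). lra.
  apply Prim_RD; auto.
Qed.
Lemma dec_RD t : RD wdec t (LVal PD (aD + kD * t)).
Proof.
  unfold wdec. apply (RD_eq _ _ (0 + - (1 - s) * (kD * LVal PD (aD + kD * t)))). unfold kD; field; lra.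
  apply (RD_plus (fun _ => Ktop)). apply RD_const.
  apply RD_scal. apply RD_aff_neg. unfold kD. assert (0 < / (1 - s)) by (apply Rinv_0_lt_compat; lra). lra.
  apply Prim_LD; auto.
Qed.

Lemma config_cell : cell_solvable F s Ktop lam.
Proof.
  assert (is : 0 < / s) by (apply Rinv_0_lt_compat; lra).
  assert (is' : 0 < / (1 - s)) by (apply Rinv_0_lt_compat; lra).
  assert (lev_s : lam + / s * s = lam + 1) by (field; lra).
  assert (lev_d1 : aD + kD * s = lam + 1) by (unfold aD, kD; field; lra).
  assert (lev_d0 : aD + kD * 1 = lam) by (unfold aD, kD; field; lra).
  apply (cell_from_w0 F s lam Ktop w0c); auto.
  - unfold w0c. destruct (Rle_dec 1 s); [lra|]. destruct (Rle_dec 0 s); [|lra].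
    unfold wdec, winc. rewrite lev_d0. rewrite Rmult_0_r, Rplus_0_r.
    rewrite !Prim_bot; auto. ring.
  - intros t Ht. destruct (Rtotal_order t s) as [Hlt|[Heq|Hgt]].
    + exists (LVal PI (lam + / s * t)), (RVal PI (lam + / s * t)). split; [|split].
      * apply (LD_ext _ winc). exists t. split; [lra|]. intros y Hy. unfold w0c. destruct Rle_dec; [auto|lra].
        apply inc_LD.
      * apply (RD_ext _ winc). exists (s - t). split; [lra|]. intros y Hy. unfold w0c. destruct Rle_dec; [auto|lra].
        apply inc_RD.
      * assert (V0 s t = / s * t).
        { unfold V0. rewrite Rmin_left. unfold Rdiv; ring.
          apply Rle_trans with 1. apply (Rmult_le_reg_l s); [lra|]. unfold Rdiv. replace (s * (t * / s)) with t by (field; lra). lra.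
          apply (Rmult_le_reg_l (1 - s)); [lra|]. unfold Rdiv. replace ((1 - s) * ((1 - t) * / (1 - s))) with (1 - t) by (field; lra). lra. }
        rewrite H. replace (/ s * t + lam) with (lam + / s * t) by ring. apply Ci.
        split. assert (0 < / s * t) by (apply Rmult_lt_0_compat; lra). lra.
        assert (/ s * t < / s * s) by (apply Rmult_lt_compat_l; lra). lra.
    + subst t. exists (LVal PI (lam + 1)), (LVal PD (lam + 1)). split; [|split].
      * apply (LD_ext _ winc). exists s. split; [lra|]. intros y Hy. unfold w0c. destruct Rle_dec; [auto|lra].
        rewrite <- lev_s. apply inc_LD.
      * apply (RD_ext _ wdec). exists (1 - s). split; [lra|]. intros y Hy. unfold w0c. destruct Rle_dec.
        -- assert (y = s) by lra. subst y. unfold winc, wdec, Ktop. rewrite lev_s, lev_d1. ring.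
        -- auto.
        -- rewrite <- lev_d1. apply dec_RD.
      * assert (V0 s s = 1).
        { unfold V0. rewrite Rmin_left. field; lra.
          unfold Rdiv. replace (s * / s) with 1 by (field; lra). replace ((1 - s) * / (1 - s)) with 1 by (field; lra). lra. }
        rewrite H. replace (1 + lam) with (lam + 1) by ring. apply Ct.
    + exists (RVal PD (aD + kD * t)), (LVal PD (aD + kD * t)). split; [|split].
      * apply (LD_ext _ wdec). exists (t - s). split; [lra|]. intros y Hy. unfold w0c. destruct Rle_dec; [lra|auto].
        apply dec_LD.
      * apply (RD_ext _ wdec). exists (1 - t). split; [lra|]. intros y Hy. unfold w0c. destruct Rle_dec; [lra|auto].
        apply dec_RD.
      * assert (V0 s t + lam = aD + kD * t).
        { unfold V0. rewrite Rmin_right. unfold aD, kD; field; lra.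
          apply Rle_trans with 1.
          apply (Rmult_le_reg_l (1 - s)); [lra|]. unfold Rdiv. replace ((1 - s) * ((1 - t) * / (1 - s))) with (1 - t) by (field; lra). lra.
          apply (Rmult_le_reg_l s); [lra|]. unfold Rdiv. replace (s * (t * / s)) with t by (field; lra). lra. }
        rewrite H. apply Cd. unfold aD, kD.
        split. assert (0 < / (1 - s) * (1 - t)) by (apply Rmult_lt_0_compat; lra).
        replace (lam + / (1 - s) + - / (1 - s) * t) with (lam + / (1 - s) * (1 - t)) by ring. lra.
        assert (/ (1 - s) * (1 - t) < / (1 - s) * (1 - s)) by (apply Rmult_lt_compat_l; lra).
        replace (/ (1 - s) * (1 - s)) with 1 in H0 by (field; lra).
        replace (lam + / (1 - s) + - / (1 - s) * t) with (lam + / (1 - s) * (1 - t)) by ring. lra.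
  - exists (RVal PD lam), (RVal PI lam). split; [|split].
    + apply (LD_ext _ wdec). exists (1 - s). split; [lra|]. intros y Hy. unfold w0c. destruct Rle_dec; [lra|auto].
      rewrite <- lev_d0. apply dec_LD.
    + apply (RD_ext _ winc). exists s. split; [lra|]. intros y Hy. unfold w0c. destruct Rle_dec; [auto|lra].
      apply (RD_eq _ _ (RVal PI (lam + / s * 0))). f_equal; ring. apply inc_RD.
    + apply Cb.
Qed.
End Config.

End P8.
Import P8.

Module P9.

Definition prim (b : R -> R) (y : R) := RInt b 0 y.

Lemma prim_derive b : (forall x, continuous b x) -> forall x, is_derive (prim b) x (b x).
Proof.
  intros Hc x. unfold prim. apply (is_derive_RInt b (RInt b 0) 0 x); auto.
  exists (mkposreal 1 Rlt_0_1). intros y _.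
  exact (@RInt_correct R_CompleteNormedModule b 0 y (@ex_RInt_continuous R_CompleteNormedModule b 0 y (fun z _ => Hc z))).
Qed.

Lemma exR (g : R -> R) a z : (forall x, continuous g x) -> ex_RInt g a z.
Proof. intros Hc. exact (@ex_RInt_continuous R_CompleteNormedModule g a z (fun x _ => Hc x)). Qed.

Lemma RInt_prim (g G : R -> R) a z : (forall x, is_derive G x (g x)) -> (forall x, continuous g x) ->
  RInt g a z = G z - G a.
Proof.
  intros HD Hc. apply is_RInt_unique. apply (is_RInt_derive G g a z); intros; auto.
Qed.

Lemma RInt_lb (g : R -> R) a z m : a <= z -> (forall x, continuous g x) -> (forall x, a <= x <= z -> m <= g x) ->
  m * (z - a) <= RInt g a z.
Proof.
  intros Haz Hc Hm. replace (m * (z - a)) with (RInt (fun _ => m) a z).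
  apply RInt_le; auto. apply ex_RInt_const. apply exR; auto.
  intros; apply Hm; lra. rewrite RInt_const. unfold scal; simpl; unfold mult; simpl. ring.
Qed.
Lemma RInt_ub (g : R -> R) a z m : a <= z -> (forall x, continuous g x) -> (forall x, a <= x <= z -> g x <= m) ->
  RInt g a z <= m * (z - a).
Proof.
  intros Haz Hc Hm. replace (m * (z - a)) with (RInt (fun _ => m) a z).
  apply RInt_le; auto. apply exR; auto. apply ex_RInt_const.
  intros; apply Hm; lra. rewrite RInt_const. unfold scal; simpl; unfold mult; simpl. ring.
Qed.

Section FH2.
Variables (F : R -> R) (th1 th2 th3 : R) (psi1 psi3 : R -> R).
Hypothesis HF : F_hyp F th1 th2 th3.
Hypothesis H1 : psi1_spec F psi1 th1.
Hypothesis H3 : psi3_spec F psi3 th2.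

Definition c1 := b1 psi1.
Definition c2 := b2 F th1 th2.
Definition c3 := b3 psi3.
Definition B1 := prim c1.
Definition B2 := prim c2.
Definition B3 := prim c3.

Lemma c1_cont x : continuous c1 x. Proof. apply (b1_cont F th1 th2 th3 psi1); auto. Qed.
Lemma c2_cont x : continuous c2 x. Proof. apply (b2_cont F th1 th2 th3); auto. Qed.
Lemma c3_cont x : continuous c3 x. Proof. apply (b3_cont F th1 th2 th3 psi3); auto. Qed.
Lemma dB1 x : is_derive B1 x (c1 x). Proof. apply prim_derive, c1_cont. Qed.
Lemma dB2 x : is_derive B2 x (c2 x). Proof. apply prim_derive, c2_cont. Qed.
Lemma dB3 x : is_derive B3 x (c3 x). Proof. apply prim_derive, c3_cont. Qed.

Lemma c1_eq y : 1/3 <= y -> c1 y = psi1 y.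
Proof. intros. unfold c1, b1. rewrite Rmax_right; auto. Qed.
Lemma c3_eq y : 0 <= y <= 1/2 -> c3 y = psi3 y.
Proof. intros. unfold c3, b3. rewrite clamp_id; auto. Qed.
Lemma c2_eq y : 1/3 <= y <= 1/2 -> c2 y = psi2 F th1 th2 y.
Proof. intros. unfold c2, b2. rewrite clamp_id; auto. Qed.

Lemma c1_spec y : th1 <= c1 y /\ F (c1 y) = Rmax (1/3) y.
Proof. unfold c1, b1. apply H1. apply Rmax_l. Qed.
Lemma c3_spec y : 0 <= c3 y <= th2 /\ F (c3 y) = clamp 0 (1/2) y.
Proof. unfold c3, b3. apply H3. apply clamp_in; lra. Qed.
Lemma c2_spec y : th2 <= c2 y <= th1 /\ F (c2 y) = clamp (1/3) (1/2) y.
Proof. unfold c2, b2. apply (psi2_spec F th1 th2 th3); auto. apply clamp_in; lra. Qed.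

Lemma c1_mono x y : x <= y -> c1 x <= c1 y.
Proof.
  intros Hxy. destruct (c1_spec x) as [A B]. destruct (c1_spec y) as [C D].
  destruct (Rle_dec (c1 x) (c1 y)) as [|n]; auto. exfalso.
  pose proof (F_hi F th1 th2 th3 HF (c1 y) (c1 x) C ltac:(lra)).
  assert (Rmax (1/3) y < Rmax (1/3) x) by lra. unfold Rmax in H0. repeat destruct Rle_dec; lra.
Qed.

Lemma RInt_psi1 a z : 1/3 <= a -> 1/3 <= z -> RInt psi1 a z = B1 z - B1 a.
Proof.
  intros. rewrite <- (RInt_prim c1 B1 a z dB1 c1_cont). apply RInt_ext.
  intros x Hx. rewrite c1_eq; auto. pose proof (Rmin_glb a z (1/3)). lra.
Qed.
Lemma RInt_psi3 a z : 0 <= a <= 1/2 -> 0 <= z <= 1/2 -> RInt psi3 a z = B3 z - B3 a.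
Proof.
  intros. rewrite <- (RInt_prim c3 B3 a z dB3 c3_cont). apply RInt_ext.
  intros x Hx. rewrite c3_eq; auto. pose proof (Rmin_glb a z 0). pose proof (Rmax_lub a z (1/2)). lra.
Qed.
Lemma RInt_mix s : RInt (mix s psi1 psi3) (1/3) (1/2) = s * (B1 (1/2) - B1 (1/3)) + (1 - s) * (B3 (1/2) - B3 (1/3)).
Proof.
  transitivity (RInt (fun y => s * c1 y + (1 - s) * c3 y) (1/3) (1/2)).
  - apply RInt_ext. intros x Hx. rewrite Rmin_left, Rmax_right in Hx by lra. unfold mix.
    rewrite c1_eq, c3_eq; auto; lra.
  - assert (D : forall x, is_derive (fun y => s * B1 y + (1 - s) * B3 y) x (s * c1 x + (1 - s) * c3 x)).
    { intros x. pose proof (dB1 x). pose proof (dB3 x).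
      apply (is_derive_plus (fun y => s * B1 y) (fun y => (1 - s) * B3 y)).
      apply (is_derive_scal B1 x s). auto. apply (is_derive_scal B3 x (1 - s)). auto. }
    assert (C : forall x, continuous (fun y => s * c1 y + (1 - s) * c3 y) x).
    { intros x. apply (cplus (fun y => s * c1 y) (fun y => (1 - s) * c3 y)).
      apply (continuous_scal_r s c1). apply c1_cont. apply (continuous_scal_r (1 - s) c3). apply c3_cont. }
    rewrite (RInt_prim _ _ _ _ D C). match goal with |- ?a = ?b => change (@eq R a b) end. ring.
Qed.

Lemma B1_lb a z : a <= z -> th1 * (z - a) <= B1 z - B1 a.
Proof.
  intros. rewrite <- (RInt_prim c1 B1 a z dB1 c1_cont). apply RInt_lb; auto. apply c1_cont.
  intros; apply c1_spec.
Qed.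
Lemma B1_lb2 a z : a <= z -> c1 a * (z - a) <= B1 z - B1 a.
Proof.
  intros. rewrite <- (RInt_prim c1 B1 a z dB1 c1_cont). apply RInt_lb; auto. apply c1_cont.
  intros; apply c1_mono; lra.
Qed.
Lemma B3_lb a z : a <= z -> 0 <= B3 z - B3 a.
Proof.
  intros. rewrite <- (RInt_prim c3 B3 a z dB3 c3_cont). replace 0 with (0 * (z - a)) by ring. apply RInt_lb; auto. apply c3_cont.
  intros; apply c3_spec.
Qed.
Lemma B3_ub a z : a <= z -> B3 z - B3 a <= th2 * (z - a).
Proof.
  intros. rewrite <- (RInt_prim c3 B3 a z dB3 c3_cont). apply RInt_ub; auto. apply c3_cont.
  intros; apply c3_spec.
Qed.

Definition pc1 a z := mkPc B1 c1 a z.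
Definition pc2 a z := mkPc B2 c2 a z.
Definition pc3 a z := mkPc B3 c3 a z.
Definition nc1 a z := mkPc (fun y => - B1 y) (fun y => - c1 y) a z.
Definition nc2 a z := mkPc (fun y => - B2 y) (fun y => - c2 y) a z.
Definition nc3 a z := mkPc (fun y => - B3 y) (fun y => - c3 y) a z.

Lemma neg_der (B b : R -> R) : (forall x, is_derive B x (b x)) -> forall x, is_derive (fun y => - B y) x (- b x).
Proof. intros H x. apply (is_derive_opp B x (b x)). auto. Qed.

Lemma good_pc1 a z : a <= z -> goodP (pc1 a z). Proof. split; auto; apply dB1. Qed.
Lemma good_pc2 a z : a <= z -> goodP (pc2 a z). Proof. split; auto; apply dB2. Qed.
Lemma good_pc3 a z : a <= z -> goodP (pc3 a z). Proof. split; auto; apply dB3. Qed.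
Lemma good_nc1 a z : a <= z -> goodP (nc1 a z). Proof. split; auto; apply neg_der, dB1. Qed.
Lemma good_nc2 a z : a <= z -> goodP (nc2 a z). Proof. split; auto; apply neg_der, dB2. Qed.
Lemma good_nc3 a z : a <= z -> goodP (nc3 a z). Proof. split; auto; apply neg_der, dB3. Qed.

End FH2.

End P9.
Import P9.

Module P10.

Lemma Kc_same F a c : F a = c -> Kc F a a c.
Proof. intros H. split; intros q Hq; assert (q = a) by lra; subst; lra. Qed.
Lemma Kc_cv F a b c : b < a -> (forall q, b <= q <= a -> F q <= c) -> Kc F a b c.
Proof. intros H K. split; auto. intros q Hq; lra. Qed.
Lemma Kc_cx F a b c : a < b -> (forall q, a <= q <= b -> c <= F q) -> Kc F a b c.
Proof. intros H K. split; auto. intros q Hq; lra. Qed.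

Ltac kill_ifs := repeat match goal with
 | |- context [if Rle_dec ?x ?y then _ else _] => destruct (Rle_dec x y); try (exfalso; lra)
 | |- context [if Rlt_dec ?x ?y then _ else _] => destruct (Rlt_dec x y); try (exfalso; lra)
end.

Ltac ev := unfold pc1, pc2, pc3, nc1, nc2, nc3; cbn [RVal LVal]; unfold RVp, LVp; cbn [pa pz pb];
  cbv beta; kill_ifs; rewrite ?Rplus_0_l, ?Rplus_0_r.

Section FH3.
Variables (F : R -> R) (th1 th2 th3 : R) (psi1 psi3 : R -> R).
Hypothesis HF : F_hyp F th1 th2 th3.
Hypothesis H1 : psi1_spec F psi1 th1.
Hypothesis H3 : psi3_spec F psi3 th2.

Local Notation C1 := (c1 psi1).
Local Notation C2 := (c2 F th1 th2).
Local Notation C3 := (c3 psi3).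

Lemma ord : 0 < th3 < th2 /\ th2 < th1.
Proof. apply (th_ord F th1 th2 th3 HF). Qed.
Lemma Fev x : F (- x) = F x.
Proof. apply (F_even F th1 th2 th3 HF). Qed.

Lemma FC1 l : 1/3 <= l -> F (C1 l) = l.
Proof. intros. destruct (c1_spec _ _ _ H1 l) as [_ E]. rewrite E. rewrite Rmax_right; lra. Qed.
Lemma FC3 l : 0 <= l <= 1/2 -> F (C3 l) = l.
Proof. intros. destruct (c3_spec _ _ _ H3 l) as [_ E]. rewrite E. apply clamp_id; auto. Qed.
Lemma FC2 l : 1/3 <= l <= 1/2 -> F (C2 l) = l.
Proof. intros. destruct (c2_spec F th1 th2 th3 HF l) as [_ E]. rewrite E. apply clamp_id; auto. Qed.

Lemma C1_ge l : th1 <= C1 l. Proof. apply (c1_spec _ _ _ H1). Qed.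
Lemma C3_rng l : 0 <= C3 l <= th2. Proof. apply (c3_spec _ _ _ H3). Qed.
Lemma C2_rng l : th2 <= C2 l <= th1. Proof. apply (c2_spec F th1 th2 th3 HF). Qed.

Lemma Cvals : C3 0 = 0 /\ C3 (1/3) = th3 /\ C3 (1/2) = th2 /\ C1 (1/3) = th1 /\ C2 (1/3) = th1 /\ C2 (1/2) = th2.
Proof.
  destruct (psi_vals F th1 th2 th3 psi1 psi3 HF H1 H3) as (A & B & C & D & E & G).
  rewrite c3_eq, c3_eq, c3_eq, c1_eq, c2_eq, c2_eq; auto; lra.
Qed.

Lemma C3_pos l : 0 < l <= 1/2 -> 0 < C3 l.
Proof.
  intros. destruct (C3_rng l). destruct (Req_dec (C3 l) 0) as [E|E]; [|lra].
  pose proof (FC3 l ltac:(lra)). rewrite E in H4. destruct (F_vals F th1 th2 th3 HF). lra.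
Qed.

Lemma K1 l : 1/3 <= l -> Kc F (C1 l) (C1 l) l. Proof. intros; apply Kc_same, FC1; auto. Qed.
Lemma K1n l : 1/3 <= l -> Kc F (- C1 l) (- C1 l) l. Proof. intros; apply Kc_same; rewrite Fev; apply FC1; auto. Qed.
Lemma K3 l : 0 <= l <= 1/2 -> Kc F (C3 l) (C3 l) l. Proof. intros; apply Kc_same, FC3; auto. Qed.
Lemma K3n l : 0 <= l <= 1/2 -> Kc F (- C3 l) (- C3 l) l. Proof. intros; apply Kc_same; rewrite Fev; apply FC3; auto. Qed.
Lemma K2 l : 1/3 <= l <= 1/2 -> Kc F (C2 l) (C2 l) l. Proof. intros; apply Kc_same, FC2; auto. Qed.
Lemma K2n l : 1/3 <= l <= 1/2 -> Kc F (- C2 l) (- C2 l) l. Proof. intros; apply Kc_same; rewrite Fev; apply FC2; auto. Qed.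

Lemma T13 : Kc F th3 th1 (1/3).
Proof. destruct ord. apply Kc_cx. lra. intros q Hq. apply (KF5 F th1 th2 th3 HF). rewrite Rabs_right; lra. Qed.
Lemma T13n : Kc F (- th1) (- th3) (1/3).
Proof. destruct ord. apply Kc_cx. lra. intros q Hq. apply (KF5 F th1 th2 th3 HF). rewrite Rabs_left; lra. Qed.
Lemma Tflip t b : 1/2 <= t -> - C1 t <= b < C1 t -> Kc F (C1 t) b t.
Proof.
  intros Ht Hb. apply Kc_cv. lra. intros q Hq. apply (KF2 F th1 th2 th3 psi1 HF H1). lra.
  rewrite <- (c1_eq psi1 t) by lra. apply Rabs_le; lra.
Qed.
Lemma Tflip3 u : 0 < u <= 1/2 -> Kc F (C3 u) (- C3 u) u.
Proof.
  intros Hu. pose proof (C3_pos u Hu). apply Kc_cv. lra. intros q Hq. apply (KF1 F th1 th2 th3 psi3 HF H3). lra.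
  rewrite <- (c3_eq psi3 u) by lra. apply Rabs_le; lra.
Qed.
Lemma Tn2n3 u : 1/3 <= u <= 1/2 -> Kc F (- C2 u) (- C3 u) u.
Proof.
  intros Hu. destruct (Req_dec u (1/2)) as [E|E].
  - subst. destruct Cvals as (_ & _ & A & _ & _ & B). rewrite A, B. apply Kc_same. rewrite Fev.
    destruct (F_vals F th1 th2 th3 HF) as (_ & X & _). auto.
  - destruct (Rle_dec (C2 u) (C3 u)) as [h|h].
    + assert (C2 u = C3 u) by (pose proof (C2_rng u); pose proof (C3_rng u); lra). rewrite H. apply K3n; lra.
    + apply Kc_cx. lra. intros q Hq. apply (KF3 F th1 th2 th3 psi3 HF H3). lra.
      rewrite <- (c3_eq psi3 u), <- (c2_eq F th1 th2 u) by lra. rewrite Rabs_left1. lra. pose proof (C3_rng u); lra.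
Qed.
Lemma Tn2n1 u : 1/3 <= u <= 1/2 -> Kc F (- C2 u) (- C1 u) u.
Proof.
  intros Hu. destruct (Rle_dec (C1 u) (C2 u)) as [h|h].
  - assert (C1 u = C2 u) by (pose proof (C2_rng u); pose proof (C1_ge u); lra). rewrite <- H. apply K1n; lra.
  - apply Kc_cv. lra. intros q Hq. apply (KF4 F th1 th2 th3 psi1 HF H1). lra.
    rewrite <- (c1_eq psi1 u), <- (c2_eq F th1 th2 u) by lra. rewrite Rabs_left1. lra. pose proof (C2_rng u); destruct ord; lra.
Qed.
Lemma T32 u : 1/3 <= u <= 1/2 -> Kc F (C3 u) (C2 u) u.
Proof.
  intros Hu. destruct (Rle_dec (C2 u) (C3 u)) as [h|h].
  - assert (C2 u = C3 u) by (pose proof (C2_rng u); pose proof (C3_rng u); lra). rewrite H. apply K3; lra.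
  - apply Kc_cx. lra. intros q Hq. apply (KF3 F th1 th2 th3 psi3 HF H3). lra.
    rewrite <- (c3_eq psi3 u), <- (c2_eq F th1 th2 u) by lra. rewrite Rabs_right. lra. pose proof (C3_rng u); lra.
Qed.
Lemma T12 u : 1/3 <= u <= 1/2 -> Kc F (C1 u) (C2 u) u.
Proof.
  intros Hu. destruct (Rle_dec (C1 u) (C2 u)) as [h|h].
  - assert (C1 u = C2 u) by (pose proof (C2_rng u); pose proof (C1_ge u); lra). rewrite <- H. apply K1; lra.
  - apply Kc_cv. lra. intros q Hq. apply (KF4 F th1 th2 th3 psi1 HF H1). lra.
    rewrite <- (c1_eq psi1 u), <- (c2_eq F th1 th2 u) by lra. rewrite Rabs_right. lra. pose proof (C2_rng u); destruct ord; lra.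
Qed.

Definition PIa := [pc3 psi3 0 (1/3); pc1 psi1 (1/3) 1].
Definition PDa t1 t2 t3 t4 := [nc3 psi3 0 t4; nc1 psi1 t4 t3; nc2 F th1 th2 t3 t2; pc3 psi3 t2 t1; pc1 psi1 t1 1].

Lemma Ci_a l : 0 < l < 0 + 1 -> Kc F (LVal PIa l) (RVal PIa l) l.
Proof.
  intros Hl. unfold PIa. destruct Cvals as (A0 & A13 & A12 & B13 & _).
  destruct (Rtotal_order l (1/3)) as [h|[h|h]]; ev.
  - apply K3; lra.
  - subst l. rewrite A13, B13. apply T13.
  - apply K1; lra.
Qed.


Lemma C31 l : C3 l < C1 l. Proof. pose proof (C3_rng l); pose proof (C1_ge l); destruct ord; lra. Qed.
Lemma C21 l : C2 l <= C1 l. Proof. pose proof (C2_rng l); pose proof (C1_ge l); destruct ord; lra. Qed.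
Lemma C1p l : 0 < C1 l. Proof. pose proof (C1_ge l); destruct ord; lra. Qed.

Lemma Cd_A u : 0 <= u <= 1/2 -> forall l, 0 < l < 0 + 1 ->
  Kc F (RVal (PDa (1/2) u u u) l) (LVal (PDa (1/2) u u u) l) l.
Proof.
  intros Hu l Hl. unfold PDa. pose proof (C3_rng l). pose proof (C31 l). pose proof (C1p l).
  destruct (Rtotal_order l u) as [h|[h|h]].
  - ev. apply K3n; lra.
  - subst l. destruct (Req_dec u (1/2)) as [E|E].
    + subst u. ev. apply Tflip; lra.
    + ev. apply Tflip3; lra.
  - destruct (Rtotal_order l (1/2)) as [h2|[h2|h2]].
    + ev. apply K3; lra.
    + subst l. ev. apply Tflip; lra.
    + ev. apply K1; lra.
Qed.

Lemma Cd_A' u : 1/3 <= u <= 1/2 -> forall l, 0 < l < 0 + 1 ->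
  Kc F (RVal (PDa (1/2) (1/2) u u) l) (LVal (PDa (1/2) (1/2) u u) l) l.
Proof.
  intros Hu l Hl. unfold PDa. pose proof (C3_rng l). pose proof (C31 l). pose proof (C21 l). pose proof (C1p l). pose proof (C2_rng l).
  destruct (Rtotal_order l u) as [h|[h|h]].
  - ev. apply K3n; lra.
  - subst l. destruct (Req_dec u (1/2)) as [E|E].
    + subst u. ev. apply Tflip; lra.
    + ev. apply Tn2n3; lra.
  - destruct (Rtotal_order l (1/2)) as [h2|[h2|h2]].
    + ev. apply K2n; lra.
    + subst l. ev. apply Tflip; destruct ord; lra.
    + ev. apply K1; lra.
Qed.

Lemma Cd_B u : 1/3 <= u <= 1/2 -> forall l, 0 < l < 0 + 1 ->
  Kc F (RVal (PDa (1/2) (1/2) u (1/3)) l) (LVal (PDa (1/2) (1/2) u (1/3)) l) l.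
Proof.
  intros Hu l Hl. unfold PDa. pose proof (C3_rng l). pose proof (C31 l). pose proof (C21 l). pose proof (C1p l). pose proof (C2_rng l).
  destruct Cvals as (A0 & A13 & A12 & B13 & D13 & D12).
  destruct (Rtotal_order l (1/3)) as [h|[h|h]].
  - ev. apply K3n; lra.
  - subst l. destruct (Req_dec u (1/3)) as [E|E].
    + subst u. ev. rewrite A13, D13. apply T13n.
    + ev. rewrite A13, B13. apply T13n.
  - destruct (Rtotal_order l u) as [h1|[h1|h1]].
    + ev. apply K1n; lra.
    + subst l. destruct (Req_dec u (1/2)) as [E|E].
      * subst u. ev. apply Tflip; lra.
      * ev. apply Tn2n1; lra.
    + destruct (Rtotal_order l (1/2)) as [h2|[h2|h2]].
      * ev. apply K2n; lra.
      * subst l. ev. apply Tflip; destruct ord; lra.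
      * ev. apply K1; lra.
Qed.

Lemma Cd_C t : 1/2 <= t <= 1 -> forall l, 0 < l < 0 + 1 ->
  Kc F (RVal (PDa t t t (1/3)) l) (LVal (PDa t t t (1/3)) l) l.
Proof.
  intros Ht l Hl. unfold PDa. pose proof (C1p l).
  destruct Cvals as (A0 & A13 & A12 & B13 & D13 & D12).
  destruct (Rtotal_order l (1/3)) as [h|[h|h]].
  - ev. apply K3n; lra.
  - subst l. ev. rewrite A13, B13. apply T13n.
  - destruct (Rtotal_order l t) as [h1|[h1|h1]].
    + ev. apply K1n; lra.
    + subst l. ev. apply Tflip; lra.
    + ev. apply K1; lra.
Qed.

Definition famA t1 t2 t3 t4 :=
  (t1 = 1/2 /\ t2 = t4 /\ t3 = t4 /\ 0 <= t4 <= 1/2) \/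
  (t1 = 1/2 /\ t2 = 1/2 /\ t3 = t4 /\ 1/3 <= t4 <= 1/2) \/
  (t1 = 1/2 /\ t2 = 1/2 /\ 1/3 <= t3 <= 1/2 /\ t4 = 1/3) \/
  (t2 = t1 /\ t3 = t1 /\ 1/2 <= t1 <= 1 /\ t4 = 1/3).

Lemma Cd_fam t1 t2 t3 t4 : famA t1 t2 t3 t4 -> forall l, 0 < l < 0 + 1 ->
  Kc F (RVal (PDa t1 t2 t3 t4) l) (LVal (PDa t1 t2 t3 t4) l) l.
Proof.
  intros [(->&->&->&Hh)|[(->&->&->&Hh)|[(->&->&Hh&->)|(->&->&Hh&->)]]].
  apply Cd_A; auto. apply Cd_A'; auto. apply Cd_B; auto. apply Cd_C; auto.
Qed.

Lemma fam_ord t1 t2 t3 t4 : famA t1 t2 t3 t4 -> 0 <= t4 <= t3 /\ t3 <= t2 /\ t2 <= t1 /\ t1 <= 1.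
Proof. intros [(->&->&->&Hh)|[(->&->&->&Hh)|[(->&->&Hh&->)|(->&->&Hh&->)]]]; lra. Qed.

Lemma Ct_fam t1 t2 t3 t4 : famA t1 t2 t3 t4 -> Kc F (LVal PIa (0 + 1)) (LVal (PDa t1 t2 t3 t4) (0 + 1)) (0 + 1).
Proof.
  intros Hf. replace (0 + 1) with 1 by ring. pose proof (C1p 1).
  destruct (fam_ord _ _ _ _ Hf) as (O1 & O2 & O3 & O4).
  destruct (Req_dec t1 1) as [E1|E1].
  - assert (t2 = 1 /\ t3 = 1 /\ t4 = 1/3) as (-> & -> & ->).
    { destruct Hf as [(->&->&->&Hh)|[(->&->&->&Hh)|[(->&->&Hh&->)|(->&->&Hh&->)]]]; lra. }
    subst t1. unfold PIa, PDa. ev. apply Tflip; lra.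
  - unfold PIa, PDa. ev. apply K1; lra.
Qed.

Lemma Cb_fam t1 t2 t3 t4 : famA t1 t2 t3 t4 -> Kc F (RVal (PDa t1 t2 t3 t4) 0) (RVal PIa 0) 0.
Proof.
  intros Hf. destruct (fam_ord _ _ _ _ Hf) as (O1 & O2 & O3 & O4).
  destruct Cvals as (A0 & _).
  unfold PIa, PDa. destruct (Req_dec t4 0) as [E4|E4].
  - assert (t3 = 0 /\ t2 = 0 /\ t1 = 1/2) as (-> & -> & ->).
    { destruct Hf as [(->&->&->&Hh)|[(->&->&->&Hh)|[(->&->&Hh&->)|(->&->&Hh&->)]]]; lra. }
    subst t4. ev. rewrite A0. apply Kc_same. apply (F_vals F th1 th2 th3 HF).
  - ev. rewrite A0, Ropp_0. apply Kc_same. apply (F_vals F th1 th2 th3 HF).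
Qed.

End FH3.

End P10.
Import P10.

Module P11.

Ltac kill_ifs := repeat match goal with
 | |- context [if Rle_dec ?x ?y then _ else _] => destruct (Rle_dec x y); try (exfalso; lra)
 | |- context [if Rlt_dec ?x ?y then _ else _] => destruct (Rlt_dec x y); try (exfalso; lra)
end.
Ltac ev := unfold pc1, pc2, pc3, nc1, nc2, nc3; cbn [RVal LVal]; unfold RVp, LVp; cbn [pa pz pb];
  cbv beta; kill_ifs; rewrite ?Rplus_0_l, ?Rplus_0_r.

Section FH4.
Variables (F : R -> R) (th1 th2 th3 : R) (psi1 psi3 : R -> R).
Hypothesis HF : F_hyp F th1 th2 th3.
Hypothesis H1 : psi1_spec F psi1 th1.
Hypothesis H3 : psi3_spec F psi3 th2.

Local Notation C1 := (c1 psi1).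
Local Notation C2 := (c2 F th1 th2).
Local Notation C3 := (c3 psi3).
Local Notation K1 := (K1 F th1 psi1 H1).
Local Notation K2 := (K2 F th1 th2 th3 HF).
Local Notation K3 := (K3 F th2 psi3 H3).
Local Notation Tflip := (Tflip F th1 th2 th3 psi1 HF H1).
Local Notation T13 := (T13 F th1 th2 th3 HF).
Local Notation T32 := (T32 F th1 th2 th3 psi3 HF H3).
Local Notation T12 := (T12 F th1 th2 th3 psi1 HF H1).
Local Notation Cvals := (Cvals F th1 th2 th3 psi1 psi3 HF H1 H3).
Local Notation C3_rng := (C3_rng F th2 psi3 H3).
Local Notation C2_rng := (C2_rng F th1 th2 th3 HF).
Local Notation C1p := (C1p F th1 th2 th3 psi1 HF H1).
Local Notation C31 := (C31 F th1 th2 th3 psi1 psi3 HF H1 H3).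
Local Notation ord := (ord F th1 th2 th3 HF).

Definition PIb lam := [pc3 psi3 lam (1/3); pc1 psi1 (1/3) (lam + 1)].
Definition PDb lam := [pc3 psi3 lam (1/2); pc1 psi1 (1/2) (lam + 1)].

Lemma valid_b lam : 0 <= lam <= 1/3 ->
  (forall l, lam < l < lam + 1 -> Kc F (LVal (PIb lam) l) (RVal (PIb lam) l) l) /\
  (forall l, lam < l < lam + 1 -> Kc F (RVal (PDb lam) l) (LVal (PDb lam) l) l) /\
  Kc F (LVal (PIb lam) (lam + 1)) (LVal (PDb lam) (lam + 1)) (lam + 1) /\
  Kc F (RVal (PDb lam) lam) (RVal (PIb lam) lam) lam.
Proof.
  intros Hl. destruct Cvals as (A0 & A13 & A12 & B13 & D13 & D12).
  unfold PIb, PDb. split; [|split; [|split]].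
  - intros l H. destruct (Rtotal_order l (1/3)) as [h|[h|h]].
    + ev. apply K3; lra.
    + subst l. ev. rewrite A13, B13. apply T13.
    + ev. apply K1; lra.
  - intros l H. pose proof (C3_rng l). pose proof (C31 l). destruct (Rtotal_order l (1/2)) as [h|[h|h]].
    + ev. apply K3; lra.
    + subst l. ev. apply Tflip; lra.
    + ev. apply K1; lra.
  - ev. apply K1; lra.
  - destruct (Req_dec lam (1/3)) as [E|E].
    + subst lam. ev. rewrite A13, B13. apply T13.
    + ev. apply K3; lra.
Qed.

Definition PIc := [pc1 psi1 (1/3) (1/3 + 1)].
Definition PDc u2 u1 := [pc2 F th1 th2 (1/3) u2; pc3 psi3 u2 u1; pc1 psi1 u1 (1/3 + 1)].
Definition famC (u2 u1 : R) := (u1 = 1/2 /\ 1/3 <= u2 <= 1/2) \/ (u1 = u2 /\ 1/3 <= u2 <= 1/2).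

Lemma valid_c u2 u1 : famC u2 u1 ->
  (forall l, 1/3 < l < 1/3 + 1 -> Kc F (LVal PIc l) (RVal PIc l) l) /\
  (forall l, 1/3 < l < 1/3 + 1 -> Kc F (RVal (PDc u2 u1) l) (LVal (PDc u2 u1) l) l) /\
  Kc F (LVal PIc (1/3 + 1)) (LVal (PDc u2 u1) (1/3 + 1)) (1/3 + 1) /\
  Kc F (RVal (PDc u2 u1) (1/3)) (RVal PIc (1/3)) (1/3).
Proof.
  intros Hf. destruct Cvals as (A0 & A13 & A12 & B13 & D13 & D12).
  destruct ord as [O1 O2].
  assert (Hb : 1/3 <= u2 <= u1 /\ u1 <= 1/2) by (destruct Hf as [(-> & Hu)|(-> & Hu)]; lra).
  unfold PIc, PDc. split; [|split; [|split]].
  - intros l H. ev. apply K1; lra.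
  - intros l H. pose proof (C3_rng l). pose proof (C31 l). pose proof (C2_rng l). pose proof (C1p l).
    destruct Hf as [(-> & Hu)|(-> & Hu)].
    + destruct (Rtotal_order l u2) as [h|[h|h]].
      * ev. apply K2; lra.
      * subst l. destruct (Req_dec u2 (1/2)) as [E|E].
        -- subst u2. ev. apply Tflip; lra.
        -- ev. apply T32; lra.
      * destruct (Rtotal_order l (1/2)) as [h2|[h2|h2]].
        -- ev. apply K3; lra.
        -- subst l. ev. apply Tflip; lra.
        -- ev. apply K1; lra.
    + destruct (Rtotal_order l u2) as [h|[h|h]].
      * ev. apply K2; lra.
      * subst l. ev. apply T12; lra.
      * ev. apply K1; lra.
  - ev. apply K1; lra.
  - assert (F th1 = 1/3) by apply (F_vals F th1 th2 th3 HF).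
    destruct Hf as [(-> & Hu)|(-> & Hu)].
    + destruct (Req_dec u2 (1/3)) as [E|E].
      * subst u2. ev. rewrite A13, B13. apply T13.
      * ev. rewrite D13, B13. apply Kc_same; auto.
    + destruct (Req_dec u2 (1/3)) as [E|E].
      * subst u2. ev. apply K1; lra.
      * ev. rewrite D13, B13. apply Kc_same; auto.
Qed.

Definition PId lam := [pc1 psi1 lam (lam + 1)].

Lemma valid_d lam : 1/3 <= lam ->
  (forall l, lam < l < lam + 1 -> Kc F (LVal (PId lam) l) (RVal (PId lam) l) l) /\
  (forall l, lam < l < lam + 1 -> Kc F (RVal (PId lam) l) (LVal (PId lam) l) l) /\
  Kc F (LVal (PId lam) (lam + 1)) (LVal (PId lam) (lam + 1)) (lam + 1) /\
  Kc F (RVal (PId lam) lam) (RVal (PId lam) lam) lam.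
Proof.
  intros Hl. unfold PId. split; [|split; [|split]].
  - intros l H. ev. apply K1; lra.
  - intros l H. ev. apply K1; lra.
  - ev. apply K1; lra.
  - ev. apply K1; lra.
Qed.

End FH4.

End P11.
Import P11.

Module P12.

Ltac bnds := repeat (apply List.Forall_cons; [ unfold pc1, pc2, pc3, nc1, nc2, nc3; cbn [pa pz]; lra | ]); apply List.Forall_nil.
Ltac ktop := unfold Ktop; rewrite !Prim_top by bnds; unfold pc1, pc2, pc3, nc1, nc2, nc3; cbn [fold_right pB pa pz];
  match goal with |- ?a = ?b => change (@eq R a b) end.

Section FH5.
Variables (F : R -> R) (th1 th2 th3 : R) (psi1 psi3 : R -> R) (s : R).
Hypothesis HF : F_hyp F th1 th2 th3.
Hypothesis H1 : psi1_spec F psi1 th1.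
Hypothesis H3 : psi3_spec F psi3 th2.
Hypothesis Hs : 0 < s < 1.

Ltac goods := repeat (apply List.Forall_cons; [ first [ apply (good_pc1 F th1 th2 th3 psi1 HF H1) | apply (good_pc2 F th1 th2 th3 HF) | apply (good_pc3 F th1 th2 th3 psi3 HF H3) | apply (good_nc1 F th1 th2 th3 psi1 HF H1) | apply (good_nc2 F th1 th2 th3 HF) | apply (good_nc3 F th1 th2 th3 psi3 HF H3) ]; lra | ]); apply List.Forall_nil.

Local Notation B1 := (B1 psi1).
Local Notation B2 := (B2 F th1 th2).
Local Notation B3 := (B3 psi3).

Definition Ka t1 t2 t3 t4 := s * (B3 (1/3) - B3 0 + (B1 1 - B1 (1/3))) +
  (1 - s) * (- (B3 t4 - B3 0) - (B1 t3 - B1 t4) - (B2 t2 - B2 t3) + (B3 t1 - B3 t2) + (B1 1 - B1 t1)).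

Lemma cell_a t1 t2 t3 t4 : famA t1 t2 t3 t4 -> cell_solvable F s (Ka t1 t2 t3 t4) 0.
Proof.
  intros Hf. destruct (fam_ord _ _ _ _ Hf) as (O1 & O2 & O3 & O4).
  assert (E : Ka t1 t2 t3 t4 = Ktop s 0 (PIa psi1 psi3) (PDa F th1 th2 psi1 psi3 t1 t2 t3 t4)).
  { unfold PIa, PDa. ktop. unfold Ka. replace (0 + 1) with 1 by ring. ring. }
  rewrite E. apply config_cell; auto.
  - unfold PIa; goods.
  - unfold PDa; goods.
  - unfold PIa; bnds.
  - unfold PDa; bnds.
  - apply (Ci_a F th1 th2 th3 psi1 psi3); auto.
  - apply (Cd_fam F th1 th2 th3 psi1 psi3); auto.
  - apply (Ct_fam F th1 th2 th3 psi1 psi3); auto.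
  - apply (Cb_fam F th1 th2 th3 psi1 psi3); auto.
Qed.

Definition Kb lam := s * (B3 (1/3) - B3 lam + (B1 (lam + 1) - B1 (1/3))) +
  (1 - s) * (B3 (1/2) - B3 lam + (B1 (lam + 1) - B1 (1/2))).

Lemma cell_b lam : 0 <= lam <= 1/3 -> cell_solvable F s (Kb lam) lam.
Proof.
  intros Hl. destruct (valid_b F th1 th2 th3 psi1 psi3 HF H1 H3 lam Hl) as (Ci & Cd & Ct & Cb).
  assert (E : Kb lam = Ktop s lam (PIb psi1 psi3 lam) (PDb psi1 psi3 lam)).
  { unfold PIb, PDb. ktop. unfold Kb. ring. }
  rewrite E. apply config_cell; auto.
  - unfold PIb; goods.
  - unfold PDb; goods.
  - unfold PIb; bnds.
  - unfold PDb; bnds.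
Qed.

Definition Kcc u2 u1 := s * (B1 (1/3 + 1) - B1 (1/3)) +
  (1 - s) * (B2 u2 - B2 (1/3) + (B3 u1 - B3 u2) + (B1 (1/3 + 1) - B1 u1)).

Lemma cell_c u2 u1 : famC u2 u1 -> cell_solvable F s (Kcc u2 u1) (1/3).
Proof.
  intros Hf. destruct (valid_c F th1 th2 th3 psi1 psi3 HF H1 H3 u2 u1 Hf) as (Ci & Cd & Ct & Cb).
  assert (Hb : 1/3 <= u2 <= u1 /\ u1 <= 1/2) by (destruct Hf as [(-> & Hu)|(-> & Hu)]; lra).
  assert (E : Kcc u2 u1 = Ktop s (1/3) (PIc psi1) (PDc F th1 th2 psi1 psi3 u2 u1)).
  { unfold PIc, PDc. ktop. unfold Kcc. ring. }
  rewrite E. apply config_cell; auto.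
  - unfold PIc; goods.
  - unfold PDc; goods.
  - unfold PIc; bnds.
  - unfold PDc; bnds.
Qed.

Lemma cell_d lam : 1/3 <= lam -> cell_solvable F s (B1 (lam + 1) - B1 lam) lam.
Proof.
  intros Hl. destruct (valid_d F th1 psi1 H1 lam Hl) as (Ci & Cd & Ct & Cb).
  assert (E : B1 (lam + 1) - B1 lam = Ktop s lam (PId psi1 lam) (PId psi1 lam)).
  { unfold PId. ktop. ring. }
  rewrite E. apply config_cell; auto.
  - unfold PId; goods.
  - unfold PId; goods.
  - unfold PId; bnds.
  - unfold PId; bnds.
Qed.

End FH5.

End P12.
Import P12.

Module P13.

Lemma IVT2 (f : R -> R) a b v : (forall x, continuous f x) -> a <= b -> (f a - v) * (f b - v) <= 0 ->
  exists u, a <= u <= b /\ f u = v.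
Proof.
  intros Hc Hab Hs. destruct (IVT_cor (fun x => f x - v) a b) as [u [Hu E]]; auto.
  intros x. apply continuity_pt_minus. apply cpt; auto. apply continuity_pt_const. intros ? ?; auto.
  exists u. split; auto. lra.
Qed.

Lemma chain2 d0 d1 d2 : d0 * d2 <= 0 -> d0 * d1 <= 0 \/ d1 * d2 <= 0.
Proof.
  intros H. destruct (Rle_dec (d0 * d1) 0); auto. destruct (Rle_dec (d1 * d2) 0); auto. exfalso.
  assert (0 < (d0 * d1) * (d1 * d2)) by (apply Rmult_lt_0_compat; lra).
  assert ((d0 * d1) * (d1 * d2) = (d0 * d2) * (d1 * d1)) by ring.
  assert (0 <= d1 * d1) by nra. nra.
Qed.

Section Final.
Variables (F : R -> R) (th1 th2 th3 : R) (psi1 psi3 : R -> R).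
Hypothesis HF : F_hyp F th1 th2 th3.
Hypothesis H1 : psi1_spec F psi1 th1.
Hypothesis H3 : psi3_spec F psi3 th2.

Local Notation B1 := (B1 psi1).
Local Notation B2 := (B2 F th1 th2).
Local Notation B3 := (B3 psi3).

Lemma exB1 x : ex_derive B1 x. Proof. eexists; apply (dB1 F th1 th2 th3 psi1 HF H1). Qed.
Lemma exB2 x : ex_derive B2 x. Proof. eexists; apply (dB2 F th1 th2 th3 HF). Qed.
Lemma exB3 x : ex_derive B3 x. Proof. eexists; apply (dB3 F th1 th2 th3 psi3 HF H3). Qed.

Ltac cont_tac := intros x; apply cder; unfold Ka, Kb, Kcc; auto_derive;
  repeat split; try apply exB1; try apply exB2; try apply exB3; auto.

Local Notation Ka s := (Ka F th1 th2 psi1 psi3 s).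
Local Notation Kb s := (Kb psi1 psi3 s).
Local Notation Kcc s := (Kcc F th1 th2 psi1 psi3 s).

Lemma a_chain s : 0 < s < 1 -> forall p, Ka s 1 1 1 (1/3) <= p <= Ka s (1/2) 0 0 0 -> cell_solvable F s p 0.
Proof.
  intros Hs p Hp.
  set (fA := fun u => Ka s (1/2) u u u).
  set (fA' := fun u => Ka s (1/2) (1/2) u u).
  set (fB := fun u => Ka s (1/2) (1/2) u (1/3)).
  set (fC := fun u => Ka s u u u (1/3)).
  assert (CA : forall x, continuous fA x) by (unfold fA; cont_tac).
  assert (CA' : forall x, continuous fA' x) by (unfold fA'; cont_tac).
  assert (CB : forall x, continuous fB x) by (unfold fB; cont_tac).
  assert (CC : forall x, continuous fC x) by (unfold fC; cont_tac).
  assert (H04 : (fA 0 - p) * (fC 1 - p) <= 0) by (unfold fA, fC; nra).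
  assert (J1 : fA (1/2) = fA' (1/2)) by reflexivity.
  assert (J2 : fA' (1/3) = fB (1/3)) by reflexivity.
  assert (J3 : fB (1/2) = fC (1/2)) by reflexivity.
  destruct (chain2 (fA 0 - p) (fC (1/2) - p) (fC 1 - p) H04) as [K|K].
  - destruct (chain2 (fA 0 - p) (fB (1/3) - p) (fC (1/2) - p) K) as [K2|K2].
    + destruct (chain2 (fA 0 - p) (fA (1/2) - p) (fB (1/3) - p) K2) as [K3|K3].
      * destruct (IVT2 fA 0 (1/2) p CA ltac:(lra) K3) as [u [Hu E]].
        rewrite <- E. apply (cell_a F th1 th2 th3 psi1 psi3 s HF H1 H3 Hs). left. repeat split; lra.
      * rewrite J1, <- J2 in K3. rewrite Rmult_comm in K3.
        destruct (IVT2 fA' (1/3) (1/2) p CA' ltac:(lra) K3) as [u [Hu E]].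
        rewrite <- E. apply (cell_a F th1 th2 th3 psi1 psi3 s HF H1 H3 Hs). right; left. repeat split; lra.
    + rewrite <- J3 in K2.
      destruct (IVT2 fB (1/3) (1/2) p CB ltac:(lra) K2) as [u [Hu E]].
      rewrite <- E. apply (cell_a F th1 th2 th3 psi1 psi3 s HF H1 H3 Hs). right; right; left. repeat split; lra.
  - destruct (IVT2 fC (1/2) 1 p CC ltac:(lra) K) as [u [Hu E]].
    rewrite <- E. apply (cell_a F th1 th2 th3 psi1 psi3 s HF H1 H3 Hs). right; right; right. repeat split; lra.
Qed.

Definition Aconst := B3 (1/3) - B3 0 + (B1 1 - B1 (1/3)).

Lemma pZ_eq s : Ka s 1 1 1 (1/3) = (2 * s - 1) * Aconst.
Proof. unfold P12.Ka, Aconst. match goal with |- ?a = ?b => change (@eq R a b) end. ring. Qed.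

Lemma pp_eq s : p_plus s psi1 psi3 = Ka s (1/2) 0 0 0.
Proof.
  unfold p_plus. rewrite (RInt_psi3 F th1 th2 th3 psi3 HF H3) by lra.
  rewrite (RInt_psi1 F th1 th2 th3 psi1 HF H1) by lra.
  rewrite (RInt_mix F th1 th2 th3 psi1 psi3 HF H1 H3).
  unfold P12.Ka. match goal with |- ?a = ?b => change (@eq R a b) end. ring.
Qed.

Lemma qm_eq s : q_minus s psi1 psi3 = B1 (1/3 + 1) - B1 (1/2) + (s * (B1 (1/2) - B1 (1/3)) + (1 - s) * (B3 (1/2) - B3 (1/3))).
Proof.
  unfold q_minus. rewrite (RInt_psi1 F th1 th2 th3 psi1 HF H1) by lra.
  rewrite (RInt_mix F th1 th2 th3 psi1 psi3 HF H1 H3). replace (4/3) with (1/3 + 1) by field. reflexivity.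
Qed.

Lemma qp_eq : q_plus psi1 = B1 (1/3 + 1) - B1 (1/3).
Proof. unfold q_plus. rewrite (RInt_psi1 F th1 th2 th3 psi1 HF H1) by lra. replace (4/3) with (1/3 + 1) by field. reflexivity. Qed.

Lemma order s : 0 < s < 1 -> 0 < p_plus s psi1 psi3 /\ p_plus s psi1 psi3 < q_minus s psi1 psi3 /\ q_minus s psi1 psi3 < q_plus psi1.
Proof.
  intros Hs. rewrite pp_eq, qm_eq, qp_eq. unfold P12.Ka.
  destruct (th_ord F th1 th2 th3 HF) as [[O0 O1] O2].
  pose proof (B1_lb F th1 th2 th3 psi1 HF H1 (1/3) (1/2) ltac:(lra)).
  pose proof (B1_lb F th1 th2 th3 psi1 HF H1 (1/2) 1 ltac:(lra)).
  pose proof (B1_lb F th1 th2 th3 psi1 HF H1 1 (1/3 + 1) ltac:(lra)).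
  pose proof (B3_lb F th1 th2 th3 psi3 HF H3 0 (1/3) ltac:(lra)).
  pose proof (B3_ub F th1 th2 th3 psi3 HF H3 0 (1/3) ltac:(lra)).
  pose proof (B3_lb F th1 th2 th3 psi3 HF H3 (1/3) (1/2) ltac:(lra)).
  pose proof (B3_ub F th1 th2 th3 psi3 HF H3 (1/3) (1/2) ltac:(lra)).
  match goal with |- ?a /\ ?b /\ ?c => change (a /\ b /\ c) end.
  assert (B1 (1/3 + 1) - B1 (1/2) = (B1 (1/3 + 1) - B1 1) + (B1 1 - B1 (1/2))) by ring.
  split; [|split].
  - assert (0 < B1 1 - B1 (1/2)) by lra.
    assert (0 <= s * (B1 (1/2) - B1 (1/3))) by (apply Rmult_le_pos; lra).
    assert (0 <= (1 - s) * (B3 (1/2) - B3 (1/3))) by (apply Rmult_le_pos; lra).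
    ring_simplify. nra.
  - nra.
  - assert (0 < (1 - s) * ((B1 (1/2) - B1 (1/3)) - (B3 (1/2) - B3 (1/3)))) by (apply Rmult_lt_0_compat; lra).
    nra.
Qed.

Lemma a_full s : 0 < s < 1 -> forall p, 0 <= p <= p_plus s psi1 psi3 -> cell_solvable F s p 0.
Proof.
  intros Hs p Hp. rewrite pp_eq in Hp.
  destruct (Rle_dec (Ka s 1 1 1 (1/3)) p) as [h|h].
  - apply a_chain; auto; lra.
  - assert (Hs' : 0 < 1 - s < 1) by lra.
    assert (C : cell_solvable F (1 - s) (- p) 0).
    { apply a_chain; auto. rewrite pZ_eq in *. split. nra.
      destruct (order (1 - s) Hs') as [P _]. rewrite pp_eq in P. lra. }
    apply (cell_reflect F (1 - s) (- p) 0) in C; auto.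
    replace (1 - (1 - s)) with s in C by ring. rewrite Ropp_involutive in C. auto.
    apply (F_even F th1 th2 th3 HF).
Qed.

Lemma Kb_Gb s lam : 0 <= lam <= 1/3 -> Kb s lam = Gb s psi1 psi3 lam.
Proof.
  intros Hl. unfold Gb. rewrite (RInt_psi3 F th1 th2 th3 psi3 HF H3) by lra.
  rewrite (RInt_psi1 F th1 th2 th3 psi1 HF H1) by lra.
  rewrite (RInt_mix F th1 th2 th3 psi1 psi3 HF H1 H3).
  unfold P12.Kb. replace (1 + lam) with (lam + 1) by ring.
  match goal with |- ?a = ?b => change (@eq R a b) end. ring.
Qed.

Lemma b_exist s : 0 < s < 1 -> forall p, p_plus s psi1 psi3 <= p <= q_minus s psi1 psi3 ->
  exists lam, 0 <= lam <= 1/3 /\ Kb s lam = p.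
Proof.
  intros Hs p Hp.
  assert (C : forall x, continuous (Kb s) x) by cont_tac.
  assert (E0 : Kb s 0 = p_plus s psi1 psi3).
  { rewrite pp_eq. unfold P12.Kb, P12.Ka. match goal with |- ?a = ?b => change (@eq R a b) end.
    replace (0 + 1) with 1 by ring. ring. }
  assert (E1 : Kb s (1/3) = q_minus s psi1 psi3).
  { rewrite qm_eq. unfold P12.Kb. match goal with |- ?a = ?b => change (@eq R a b) end. ring. }
  destruct (IVT2 (Kb s) 0 (1/3) p C ltac:(lra) ltac:(rewrite E0, E1; nra)) as [u [Hu E]].
  exists u; auto.
Qed.

Lemma c_exist s : 0 < s < 1 -> forall p, q_minus s psi1 psi3 <= p <= q_plus psi1 ->
  exists u2 u1, famC u2 u1 /\ Kcc s u2 u1 = p.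
Proof.
  intros Hs p Hp.
  set (fX := fun u => Kcc s u (1/2)). set (fY := fun u => Kcc s u u).
  assert (CX : forall x, continuous fX x) by (unfold fX; cont_tac).
  assert (CY : forall x, continuous fY x) by (unfold fY; cont_tac).
  assert (E0 : fX (1/3) = q_minus s psi1 psi3).
  { rewrite qm_eq. unfold fX, P12.Kcc. match goal with |- ?a = ?b => change (@eq R a b) end. ring. }
  assert (E1 : fY (1/3) = q_plus psi1).
  { rewrite qp_eq. unfold fY, P12.Kcc. match goal with |- ?a = ?b => change (@eq R a b) end. ring. }
  assert (J : fX (1/2) = fY (1/2)) by reflexivity.
  assert (H02 : (fX (1/3) - p) * (fY (1/3) - p) <= 0) by (rewrite E0, E1; nra).
  destruct (chain2 _ (fX (1/2) - p) _ H02) as [K|K].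
  - destruct (IVT2 fX (1/3) (1/2) p CX ltac:(lra) K) as [u [Hu E]].
    exists u, (1/2). split; auto. left; split; auto.
  - rewrite J, Rmult_comm in K.
    destruct (IVT2 fY (1/3) (1/2) p CY ltac:(lra) K) as [u [Hu E]].
    exists u, u. split; auto. right; split; auto.
Qed.

Lemma Gd_eq lam : 1/3 <= lam -> Gd psi1 lam = B1 (lam + 1) - B1 lam.
Proof. intros. unfold Gd. rewrite (RInt_psi1 F th1 th2 th3 psi1 HF H1) by lra. f_equal. f_equal. ring. Qed.

Lemma d_exist p : q_plus psi1 <= p -> exists lam, 1/3 <= lam /\ B1 (lam + 1) - B1 lam = p.
Proof.
  intros Hp. destruct (th_ord F th1 th2 th3 HF) as [[O0 O1] O2].
  destruct (continuity_ab_maj F th1 (Rmax th1 p)) as [xm [Hxm _]].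
  apply Rmax_l. intros; apply cpt, (F_cont F th1 th2 th3 HF).
  set (L := Rmax (1/3) (F xm + 1)).
  assert (HL : 1/3 <= L) by apply Rmax_l.
  assert (Hc : p <= c1 psi1 L).
  { destruct (Rle_dec p (c1 psi1 L)) as [|n]; auto. exfalso.
    destruct (c1_spec F th1 psi1 H1 L) as [A B].
    assert (F (c1 psi1 L) <= F xm). { apply Hxm. split; auto. pose proof (Rmax_r th1 p). lra. }
    rewrite B in H. rewrite Rmax_right in H by auto.
    assert (F xm + 1 <= L) by apply Rmax_r. lra. }
  pose proof (B1_lb2 F th1 th2 th3 psi1 HF H1 L (L + 1) ltac:(lra)).
  assert (C : forall x, continuous (fun lam => B1 (lam + 1) - B1 lam) x) by cont_tac.
  destruct (IVT2 (fun lam => B1 (lam + 1) - B1 lam) (1/3) L p C HL) as [u [Hu E]].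
  { rewrite qp_eq in Hp. replace (1/3 + 1) with (1/3 + 1) in Hp by ring.
    assert (B1 (L + 1) - B1 L >= p) by (replace (L + 1 - L) with 1 in H by ring; lra).
    match goal with |- (?a - _) * (?b - _) <= 0 => change ((a - p) * (b - p) <= 0) end. nra. }
  exists u. split; [lra|auto].
Qed.

End Final.

End P13.
Import P13.


Theorem propositionB1 (F : R -> R) (th1 th2 th3 : R) (psi1 psi3 : R -> R) (s : R) :
  F_hyp F th1 th2 th3 ->
  psi1_spec F psi1 th1 ->
  psi3_spec F psi3 th2 ->
  0 < s < 1 ->
  (0 < p_plus s psi1 psi3 /\ p_plus s psi1 psi3 < q_minus s psi1 psi3 /\
   q_minus s psi1 psi3 < q_plus psi1) /\
  (* (a) *)
  (forall p, 0 <= p <= p_plus s psi1 psi3 -> Hbar F s p = 0) /\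
  (* (b) *)
  (forall p, p_plus s psi1 psi3 <= p <= q_minus s psi1 psi3 ->
     (0 <= Hbar F s p <= 1/3 /\ p = Gb s psi1 psi3 (Hbar F s p)) /\
     (forall lam, 0 <= lam <= 1/3 -> p = Gb s psi1 psi3 lam -> lam = Hbar F s p)) /\
  (* (c) *)
  (forall p, q_minus s psi1 psi3 <= p <= q_plus psi1 -> Hbar F s p = 1/3) /\
  (* (d) *)
  (forall p, q_plus psi1 <= p ->
     (1/3 <= Hbar F s p /\ p = Gd psi1 (Hbar F s p)) /\
     (forall lam, 1/3 <= lam -> p = Gd psi1 lam -> lam = Hbar F s p)) /\
  (* (e) *)
  (forall p, p < 0 -> Hbar F s p = Hbar F (1 - s) (- p)).
Proof.
  intros HF H1 H3 Hs.
  split; [|split; [|split; [|split; [|split]]]].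
  - apply (order F th1 th2 th3 psi1 psi3 HF H1 H3 s Hs).
  - intros p Hp. apply Hbar_eq; auto. apply (a_full F th1 th2 th3 psi1 psi3 HF H1 H3 s Hs p Hp).
  - intros p Hp. destruct (b_exist F th1 th2 th3 psi1 psi3 HF H1 H3 s Hs p Hp) as [lam [Hl E]].
    assert (HB : Hbar F s p = lam).
    { apply Hbar_eq; auto. rewrite <- E. apply (cell_b F th1 th2 th3 psi1 psi3 s HF H1 H3 Hs lam Hl). }
    rewrite HB. split.
    + split; auto. rewrite <- (Kb_Gb F th1 th2 th3 psi1 psi3 HF H1 H3 s lam Hl). auto.
    + intros lam' Hl' Ep. rewrite <- HB. symmetry. apply Hbar_eq; auto.
      rewrite Ep, <- (Kb_Gb F th1 th2 th3 psi1 psi3 HF H1 H3 s lam' Hl').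
      apply (cell_b F th1 th2 th3 psi1 psi3 s HF H1 H3 Hs lam' Hl').
  - intros p Hp. destruct (c_exist F th1 th2 th3 psi1 psi3 HF H1 H3 s Hs p Hp) as [u2 [u1 [Hf E]]].
    apply Hbar_eq; auto. rewrite <- E. apply (cell_c F th1 th2 th3 psi1 psi3 s HF H1 H3 Hs u2 u1 Hf).
  - intros p Hp. destruct (d_exist F th1 th2 th3 psi1 HF H1 p Hp) as [lam [Hl E]].
    assert (HB : Hbar F s p = lam).
    { apply Hbar_eq; auto. rewrite <- E. apply (cell_d F th1 th2 th3 psi1 s HF H1 Hs lam Hl). }
    rewrite HB. split.
    + split; auto. rewrite (Gd_eq F th1 th2 th3 psi1 HF H1 lam Hl). auto.
    + intros lam' Hl' Ep. rewrite <- HB. symmetry. apply Hbar_eq; auto.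
      rewrite Ep, (Gd_eq F th1 th2 th3 psi1 HF H1 lam' Hl').
      apply (cell_d F th1 th2 th3 psi1 s HF H1 Hs lam' Hl').
  - intros p _. apply Hbar_reflect; auto. apply (F_even F th1 th2 th3 HF).
Qed.
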